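(* Let $H$ satisfy Condition (H). If $(x,p)\in\mathbb K\times\mathbb R$ is such that $t_{x,p}<\infty$, then $\lim_{t\uparrow t_{x,p}}(X_t^{x,p},P_t^{x,p})$ exists and is either $(\partial_-,-\infty)$ or $(\partial_+,+\infty)$.
   Context: $\mathbb K$ is either $\mathbb R$ or $[-1,1]$, with interior $\mathbb K^\circ$; $\partial_-=-\infty,\partial_+=+\infty$ if $\mathbb K=\mathbb R$ and $\partial_-=-1,\partial_+=1$ if $\mathbb K=[-1,1]$. The Lagrangian is $\mathcal L(x,v)=\sup_p(pv-H(x,p))$. The Hamilton equations are $\dot X=\partial_pH(X,P)$, $\dot P=-\partial_xH(X,P)$; $(X_s^{x,p},P_s^{x,p})$ is the solution from $(x,p)$ on its maximal interval of existence $[0,t_{x,p})$ (for $\mathbb K=[-1,1]$, maximality within $[-1,1]\times\mathbb R$). Condition (H) on $H:\mathbb K\times\mathbb R\to\mathbb R$: $H(x,0)=0$ for all $x$, and (H1) $H$ is $C^2$ with $\partial_p^2H>0$ on $\mathbb K\times\mathbb R$; if $\mathbb K=[-1,1]$, $H$ is the restriction of a $C^2$ function on $(-1-\epsilon,1+\epsilon)\times\mathbb R$ for some $\epsilon>0$. (H2) for every compact $K\subseteq\mathbb K^\circ$ there is $\theta_K:[0,\infty)\to[0,\infty)$ with $\theta_K(r)/r\to\infty$ as $r\to\infty$; for every $M\ge0$ a constant $k_M$ with $\theta_K(r+m)\le k_M(1+\theta_K(r))$ for all $m\in[0,M]$, $r\ge0$; constants $c_K,C_K$ with $\mathcal L(x,v)\ge\theta_K(|v|)-c_K$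 and $|\partial_x\mathcal L(x,v)|+|\partial_v\mathcal L(x,v)|\le C_K\theta_K(|v|)$ for all $x\in K,v\in\mathbb R$. (H3) for each compact $K\subseteq\mathbb K^\circ$, $\lim_{|p|\to\infty}\inf_{x\in K}H(x,p)/|p|=\infty$; if $\mathbb K=[-1,1]$ moreover $\lim_{p\to\infty}H(-1,p)/p=\infty$ and $\lim_{p\to-\infty}H(1,p)/(-p)=\infty$. (H4) $\lim_{x\to\partial_-}\operatorname{argmin}_pH(x,p)=-\infty$ and $\lim_{x\to\partial_+}\operatorname{argmin}_pH(x,p)=+\infty$. (H5) there are $(y_n^+,q_n^+)\in\mathbb K^\circ\times(0,\infty)$ converging to $(\partial_+,+\infty)$ with $\partial_pH(y_n^+,q)\ge0$ for $q\ge q_n^+$ and $-\partial_xH(y,q_n^+)\ge0$ for $y\ge y_n^+$, and $(y_n^-,q_n^-)\in\mathbb K^\circ\times(-\infty,0)$ converging to $(\partial_-,-\infty)$ with $\partial_pH(y_n^-,q)\le0$ for $q\le q_n^-$ and $-\partial_xH(y,q_n^-)\le0$ for $y\le y_n^-$. *)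

(* Defs.v *)
From Stdlib Require Import Reals Lra Rtopology ClassicalEpsilon.
Open Scope R_scope.

(* The domain K: [bnd = true] means K = [-1,1], [bnd = false] means K = R. *)
Definition Kdom (bnd : bool) (x : R) : Prop := if bnd then -1 <= x <= 1 else True.
Definition Kint (bnd : bool) (x : R) : Prop := if bnd then -1 < x < 1 else True.

(* Open domain on which H is C^2: R for K = R, (-1-eps, 1+eps) for K = [-1,1]. *)
Definition Udom (bnd : bool) (eps : R) (x : R) : Prop :=
  if bnd then -1 - eps < x < 1 + eps else True.

Definition cont2_at (U : R -> Prop) (f : R -> R -> R) (x p : R) : Prop :=
  forall e, 0 < e -> exists d, 0 < d /\
    forall y q, U y -> Rabs (y - x) < d -> Rabs (q - p) < d ->
      Rabs (f y q - f x p) < e.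

Definition C2_on (U : R -> Prop) (H Hx Hp Hxx Hxp Hpx Hpp : R -> R -> R) : Prop :=
  forall x p, U x ->
    derivable_pt_lim (fun y => H y p) x (Hx x p) /\
    derivable_pt_lim (fun q => H x q) p (Hp x p) /\
    derivable_pt_lim (fun y => Hx y p) x (Hxx x p) /\
    derivable_pt_lim (fun q => Hx x q) p (Hxp x p) /\
    derivable_pt_lim (fun y => Hp y p) x (Hpx x p) /\
    derivable_pt_lim (fun q => Hp x q) p (Hpp x p) /\
    cont2_at U H x p /\ cont2_at U Hx x p /\ cont2_at U Hp x p /\
    cont2_at U Hxx x p /\ cont2_at U Hxp x p /\ cont2_at U Hpx x p /\
    cont2_at U Hpp x p.

(* Lagrangian L(x,v) = sup_p (p v - H(x,p)) (a least upper bound, chosen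
   classically; it exists whenever the set is bounded above). *)
Definition Lag (H : R -> R -> R) (x v : R) : R :=
  epsilon (inhabits 0) (fun l => is_lub (fun y => exists p, y = p * v - H x p) l).

Definition is_argmin (H : R -> R -> R) (x q : R) : Prop :=
  forall p, H x q <= H x p.

(* "Eventually as x -> ∂_- (resp. ∂_+) within K°". *)
Definition ev_lo (bnd : bool) (P : R -> Prop) : Prop :=
  if bnd then exists d, 0 < d /\ forall x, -1 < x < -1 + d -> P x
  else exists A, forall x, x < A -> P x.
Definition ev_hi (bnd : bool) (P : R -> Prop) : Prop :=
  if bnd then exists d, 0 < d /\ forall x, 1 - d < x < 1 -> P x
  else exists A, forall x, A < x -> P x.

Definition seq_to_lo (bnd : bool) (u : nat -> R) : Prop :=
  if bnd then Un_cv u (-1) else cv_infty (fun n => - u n).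
Definition seq_to_hi (bnd : bool) (u : nat -> R) : Prop :=
  if bnd then Un_cv u 1 else cv_infty u.

Definition cpt_in_int (bnd : bool) (Ks : R -> Prop) : Prop :=
  compact Ks /\ forall x, Ks x -> Kint bnd x.

Definition CondH0 (bnd : bool) (H : R -> R -> R) : Prop :=
  forall x, Kdom bnd x -> H x 0 = 0.

Definition CondH1 (bnd : bool) (H Hx Hp : R -> R -> R) : Prop :=
  exists eps Hxx Hxp Hpx Hpp, 0 < eps /\
    C2_on (Udom bnd eps) H Hx Hp Hxx Hxp Hpx Hpp /\
    (forall x p, Kdom bnd x -> 0 < Hpp x p).

Definition CondH2 (bnd : bool) (H : R -> R -> R) : Prop :=
  forall Ks, cpt_in_int bnd Ks ->
  exists theta : R -> R,
    (forall r, 0 <= r -> 0 <= theta r) /\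
    (forall M, exists A, forall r, A < r -> 0 < r /\ M < theta r / r) /\
    (forall M, 0 <= M -> exists k, forall m r, 0 <= m <= M -> 0 <= r ->
        theta (r + m) <= k * (1 + theta r)) /\
    exists c C,
      forall x v, Ks x ->
        theta (Rabs v) - c <= Lag H x v /\
        exists a b,
          derivable_pt_lim (fun y => Lag H y v) x a /\
          derivable_pt_lim (fun w => Lag H x w) v b /\
          Rabs a + Rabs b <= C * theta (Rabs v).

Definition CondH3 (bnd : bool) (H : R -> R -> R) : Prop :=
  (forall Ks, cpt_in_int bnd Ks ->
     forall M, exists A, forall p x, A < Rabs p -> Ks x -> M < H x p / Rabs p) /\
  (if bnd then
     (forall M, exists A, forall p, A < p -> M < H (-1) p / p) /\
     (forall M, exists A, forall p, p < A -> M < H 1 p / (- p))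
   else True).

Definition CondH4 (bnd : bool) (H : R -> R -> R) : Prop :=
  (forall M, ev_lo bnd (fun x => forall q, is_argmin H x q -> q < - M)) /\
  (forall M, ev_hi bnd (fun x => forall q, is_argmin H x q -> M < q)).

Definition CondH5 (bnd : bool) (Hx Hp : R -> R -> R) : Prop :=
  (exists yp qp : nat -> R,
     (forall n, Kint bnd (yp n) /\ 0 < qp n) /\
     seq_to_hi bnd yp /\ cv_infty qp /\
     (forall n q, qp n <= q -> 0 <= Hp (yp n) q) /\
     (forall n y, Kdom bnd y -> yp n <= y -> 0 <= - Hx y (qp n))) /\
  (exists ym qm : nat -> R,
     (forall n, Kint bnd (ym n) /\ qm n < 0) /\
     seq_to_lo bnd ym /\ cv_infty (fun n => - qm n) /\
     (forall n q, q <= qm n -> Hp (ym n) q <= 0) /\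
     (forall n y, Kdom bnd y -> y <= ym n -> - Hx y (qm n) <= 0)).

Definition CondH (bnd : bool) (H Hx Hp : R -> R -> R) : Prop :=
  CondH0 bnd H /\ CondH1 bnd H Hx Hp /\ CondH2 bnd H /\ CondH3 bnd H /\
  CondH4 bnd H /\ CondH5 bnd Hx Hp.

Definition ham_sol (bnd : bool) (Hx Hp : R -> R -> R) (x p T : R)
    (X P : R -> R) : Prop :=
  X 0 = x /\ P 0 = p /\
  (forall s, 0 <= s < T -> Kdom bnd (X s)) /\
  (forall s, 0 < s < T ->
     derivable_pt_lim X s (Hp (X s) (P s)) /\
     derivable_pt_lim P s (- Hx (X s) (P s))) /\
  (forall e, 0 < e -> exists d, 0 < d /\ forall s, 0 <= s < d -> s < T ->
     Rabs (X s - x) < e /\ Rabs (P s - p) < e).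

Definition ham_maximal (bnd : bool) (Hx Hp : R -> R -> R) (x p T : R)
    (X P : R -> R) : Prop :=
  ham_sol bnd Hx Hp x p T X P /\
  ~ (exists T' X' P', T < T' /\ ham_sol bnd Hx Hp x p T' X' P').

Definition lim_left (f : R -> R) (T l : R) : Prop :=
  forall e, 0 < e -> exists d, 0 < d /\
    forall t, 0 <= t < T -> T - d < t -> Rabs (f t - l) < e.
Definition to_pinf_left (f : R -> R) (T : R) : Prop :=
  forall M, exists d, 0 < d /\ forall t, 0 <= t < T -> T - d < t -> M < f t.
Definition to_minf_left (f : R -> R) (T : R) : Prop :=
  to_pinf_left (fun t => - f t) T.

Definition to_lo_left (bnd : bool) (f : R -> R) (T : R) : Prop :=
  if bnd then lim_left f T (-1) else to_minf_left f T.
Definition to_hi_left (bnd : bool) (f : R -> R) (T : R) : Prop :=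
  if bnd then lim_left f T 1 else to_pinf_left f T.

(* Main.v *)
Require Import Defs.
From Stdlib Require Import Reals.
From Stdlib Require Import Lra Lia Rtopology ClassicalEpsilon Classical List.
From Coquelicot Require Import Coquelicot.
Open Scope R_scope.

Lemma mvt_bound_lt (f df : R -> R) (a b c e : R) : a < b ->
  (forall y, a <= y <= b -> derivable_pt_lim f y (df y)) ->
  (forall y, a <= y <= b -> Rabs (df y - c) <= e) ->
  Rabs (f b - f a - c * (b - a)) <= e * (b - a).
Proof.
  intros hab hd hb.
  destruct (MVT_cor2 (fun y => f y - c * y) (fun y => df y - c) a b hab) as [z [hz1 hz2]].
  { intros y hy. apply derivable_pt_lim_minus; [now apply hd|].
    replace c with (c * 1) at 2 by ring. apply derivable_pt_lim_scal, derivable_pt_lim_id. }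
  replace (f b - f a - c * (b - a)) with ((df z - c) * (b - a)) by lra.
  rewrite Rabs_mult, (Rabs_right (b - a)) by lra.
  apply Rmult_le_compat_r; [lra|]. apply hb; lra.
Qed.

Lemma mvt_bound (f df : R -> R) (a b c e : R) :
  (forall y, Rmin a b <= y <= Rmax a b -> derivable_pt_lim f y (df y)) ->
  (forall y, Rmin a b <= y <= Rmax a b -> Rabs (df y - c) <= e) ->
  Rabs (f b - f a - c * (b - a)) <= e * Rabs (b - a).
Proof.
  intros hd hb.
  destruct (Rtotal_order a b) as [h|[h|h]].
  - rewrite Rmin_left, Rmax_right in hd, hb by lra.
    rewrite (Rabs_right (b - a)) by lra. now apply (mvt_bound_lt f df).
  - subst. replace (f b - f b - c * (b - b)) with 0 by ring.
    rewrite Rminus_diag, Rabs_R0. rewrite Rmult_0_r; lra.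
  - rewrite Rmin_right, Rmax_left in hd, hb by lra.
    rewrite (Rabs_left (b - a)) by lra.
    pose proof (mvt_bound_lt f df b a c e h hd hb) as H.
    replace (f b - f a - c * (b - a)) with (- (f a - f b - c * (a - b))) by ring.
    rewrite Rabs_Ropp. lra.
Qed.

Lemma deriv_lip (f df : R -> R) (a b M : R) :
  (forall y, Rmin a b <= y <= Rmax a b -> derivable_pt_lim f y (df y)) ->
  (forall y, Rmin a b <= y <= Rmax a b -> Rabs (df y) <= M) ->
  Rabs (f b - f a) <= M * Rabs (b - a).
Proof.
  intros hd hb.
  pose proof (mvt_bound f df a b 0 M hd) as H.
  replace (f b - f a - 0 * (b - a)) with (f b - f a) in H by ring.
  apply H. intros y hy. rewrite Rminus_0_r. now apply hb.
Qed.

Lemma deriv_cont (f : R -> R) x l : derivable_pt_lim f x l -> continuity_pt f x.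
Proof. intro h. apply derivable_continuous_pt. exists l. exact h. Qed.

Lemma lip_cont (g : R -> R) K z : 0 <= K ->
  (forall s, Rabs (g s - g z) <= K * Rabs (s - z)) -> continuity_pt g z.
Proof.
  intros hK h. unfold continuity_pt, continue_in, limit1_in, limit_in.
  intros e he. exists (e / (K + 1)). split.
  { apply Rdiv_lt_0_compat; lra. }
  intros s [_ hs]. simpl in *. unfold R_dist in *.
  eapply Rle_lt_trans; [apply h|].
  apply Rle_lt_trans with (K * (e / (K+1))).
  { apply Rmult_le_compat_l; lra. }
  assert (ht : 0 < e / (K + 1)) by (apply Rdiv_lt_0_compat; lra).
  replace e with ((K+1) * (e / (K+1))) at 2 by (field; lra). nra.
Qed.

Lemma lip_contC (g : R -> R) K z : 0 <= K ->
  (forall s, Rabs (g s - g z) <= K * Rabs (s - z)) -> continuous g z.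
Proof. intros hK h. apply continuity_pt_filterlim. now apply (lip_cont g K). Qed.

Lemma exR (g : R -> R) a b : (forall z, continuous g z) -> ex_RInt g a b.
Proof. intros hc. apply (ex_RInt_continuous (V:=R_CompleteNormedModule)). intros; apply hc. Qed.

Definition RI (g : R -> R) (a b : R) : R := RInt g a b.

Lemma rint_bound (g : R -> R) a b M : (forall z, continuous g z) ->
  (forall z, Rmin a b <= z <= Rmax a b -> Rabs (g z) <= M) ->
  Rabs (RI g a b) <= M * Rabs (b - a).
Proof.
  unfold RI.
  intros hc hb. destruct (Rle_dec a b) as [h|h].
  - rewrite Rmin_left, Rmax_right in hb by lra.
    rewrite (Rabs_right (b - a)) by lra. rewrite Rmult_comm.
    apply abs_RInt_le_const; auto. now apply exR.
  - rewrite Rmin_right, Rmax_left in hb by lra.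
    rewrite (Rabs_left (b - a)) by lra.
    rewrite <- opp_RInt_swap. 2:{ now apply exR. }
    change (Rabs (- RInt g b a) <= M * - (b - a)). rewrite Rabs_Ropp.
    replace (M * - (b - a)) with ((a - b) * M) by ring.
    apply abs_RInt_le_const; auto; try lra. now apply exR.
Qed.

Lemma rint_diff (g : R -> R) u v : (forall z, continuous g z) ->
  RI g 0 u - RI g 0 v = RI g v u.
Proof.
  unfold RI.
  intros hc. assert (hi : forall a b, ex_RInt g a b).
  { intros; now apply exR. }
  rewrite <- (RInt_Chasles g v 0 u (hi _ _) (hi _ _)).
  rewrite <- (opp_RInt_swap g 0 v (hi _ _)).
  change (RInt g 0 u - RInt g 0 v = - RInt g 0 v + RInt g 0 u). ring.
Qed.

Lemma rint_minus (f g : R -> R) a b : (forall z, continuous g z) -> (forall z, continuous f z) ->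
  RI f a b - RI g a b = RI (fun s => f s - g s) a b.
Proof.
  unfold RI.
  intros hg hf. symmetry. apply (RInt_minus f g a b).
  - now apply exR.
  - now apply exR.
Qed.

Lemma tri (a b c : R) : Rabs (a - c) <= Rabs (a - b) + Rabs (b - c).
Proof. replace (a - c) with ((a - b) + (b - c)) by ring. apply Rabs_triang. Qed.

Lemma half_pow_pos k : 0 < (/2)^k.
Proof. apply pow_lt. lra. Qed.

Lemma half_pow_le1 k : (/2)^k <= 1.
Proof. induction k; simpl; [lra|]. pose proof (half_pow_pos k). nra. Qed.

Lemma half_pow_S k : (/2)^(S k) = /2 * (/2)^k.
Proof. reflexivity. Qed.

Lemma le_geo (a b K : R) : (forall k, a <= b + K * (/2)^k) -> a <= b.
Proof.
  intros h. destruct (Rle_dec a b) as [|hn]; [auto|exfalso].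
  assert (hK : 0 < K).
  { destruct (Rle_dec K 0) as [hk|hk]; [|lra]. specialize (h O). simpl in h. lra. }
  destruct (pow_lt_1_zero (/2) ltac:(rewrite Rabs_right; lra) ((a - b) / K)) as [N hN].
  { apply Rdiv_lt_0_compat; lra. }
  specialize (hN N (le_n _)). specialize (h N).
  rewrite Rabs_right in hN by (left; apply half_pow_pos).
  assert (K * (/2)^N < K * ((a - b) / K)) by (apply Rmult_lt_compat_l; auto).
  replace (K * ((a - b) / K)) with (a - b) in H by (field; lra). lra.
Qed.

Lemma geo_tele (u : nat -> R) C : (forall k, Rabs (u (S k) - u k) <= C * (/2)^k) ->
  forall m n, Rabs (u (m + n)%nat - u m) <= 2 * C * (/2)^m * (1 - (/2)^n).
Proof.
  intros h m n. induction n as [|n IH].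
  - rewrite Nat.add_0_r. simpl. rewrite Rminus_diag, Rabs_R0. lra.
  - replace (m + S n)%nat with (S (m + n)) by lia.
    eapply Rle_trans; [apply (tri _ (u (m+n)%nat))|].
    eapply Rle_trans; [apply Rplus_le_compat; [apply h|apply IH]|].
    rewrite pow_add. rewrite half_pow_S. lra.
Qed.

Lemma geo_lim (u : nat -> R) C : 0 <= C -> (forall k, Rabs (u (S k) - u k) <= C * (/2)^k) ->
  { l | forall m, Rabs (l - u m) <= 2 * C * (/2)^m }.
Proof.
  intros hC h.
  assert (hb : forall m n, Rabs (u (m + n)%nat - u m) <= 2 * C * (/2)^m).
  { intros m n. eapply Rle_trans; [apply geo_tele, h|].
    pose proof (half_pow_pos m). pose proof (half_pow_pos n). pose proof (half_pow_le1 n).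
    assert (0 <= 2 * C * (/2)^m) by nra. nra. }
  assert (hb' : forall m j, (j >= m)%nat -> Rabs (u j - u m) <= 2 * C * (/2)^m).
  { intros m j hj. replace j with (m + (j - m))%nat by lia. apply hb. }
  assert (hc : Cauchy_crit u).
  { intros e he.
    destruct (pow_lt_1_zero (/2) ltac:(rewrite Rabs_right; lra) (e / (4 * C + 1))) as [N hN].
    { apply Rdiv_lt_0_compat; lra. }
    exists N. intros n m hn hm. unfold R_dist.
    specialize (hN N (le_n _)). rewrite Rabs_right in hN by (left; apply half_pow_pos).
    pose proof (hb' N n hn). pose proof (hb' N m hm).
    assert ((4*C+1) * (/2)^N < (4*C+1) * (e / (4*C+1))) by (apply Rmult_lt_compat_l; lra).
    replace ((4*C+1) * (e / (4*C+1))) with e in H1 by (field; lra).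
    replace (u n - u m) with ((u n - u N) - (u m - u N)) by ring.
    eapply Rle_lt_trans; [apply Rabs_triang|]. rewrite Rabs_Ropp.
    pose proof (half_pow_pos N). nra. }
  destruct (Rcomplete.R_complete u hc) as [l hl]. exists l. intros m.
  apply le_epsilon. intros e he.
  destruct (hl e he) as [N hN].
  set (n := Nat.max N m).
  specialize (hN n ltac:(unfold n; lia)). unfold R_dist in hN.
  specialize (hb' m n ltac:(unfold n; lia)).
  replace (l - u m) with ((u n - u m) - (u n - l)) by ring.
  eapply Rle_trans; [apply Rabs_triang|]. rewrite Rabs_Ropp. lra.
Qed.

Definition cl (a b z : R) := Rmax a (Rmin b z).

Lemma cl_in a b z : a <= b -> a <= cl a b z <= b.
Proof. intros h. unfold cl, Rmax, Rmin. repeat destruct Rle_dec; lra. Qed.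

Lemma cl_id a b z : a <= z <= b -> cl a b z = z.
Proof. intros h. unfold cl, Rmax, Rmin. repeat destruct Rle_dec; lra. Qed.

Lemma cl_lip a b z w : a <= b -> Rabs (cl a b z - cl a b w) <= Rabs (z - w).
Proof.
  intros h. unfold cl, Rmax, Rmin. repeat destruct Rle_dec;
  unfold Rabs; repeat destruct Rcase_abs; lra.
Qed.

Definition Mlip (M : R) (f : R -> R) := forall t s, Rabs (f t - f s) <= M * Rabs (t - s).
Definition Flip (L : R) (F : R -> R -> R) :=
  forall x p y q, Rabs (F x p - F y q) <= L * (Rabs (x - y) + Rabs (p - q)).

Definition op (Ft : R -> R -> R) (ct : R -> R) (x0 : R) (Y Q : R -> R) :=
  fun t => x0 + RI (fun s => Ft (Y s) (Q s)) 0 (ct t).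

Lemma op_cont Ft M L Y Q : 0 <= M -> 0 <= L -> Flip L Ft -> Mlip M Y -> Mlip M Q ->
  forall z, continuous (fun s => Ft (Y s) (Q s)) z.
Proof.
  intros hM hL hF hY hQ z. apply (lip_contC _ (2 * L * M)); [nra|].
  intros s. eapply Rle_trans; [apply hF|].
  pose proof (hY s z). pose proof (hQ s z). pose proof (Rabs_pos (s - z)). nra.
Qed.

Lemma op_lip Ft ct x0 M L Y Q : 0 <= M -> 0 <= L -> Flip L Ft -> (forall x p, Rabs (Ft x p) <= M) ->
  (forall t s, Rabs (ct t - ct s) <= Rabs (t - s)) ->
  Mlip M Y -> Mlip M Q -> Mlip M (op Ft ct x0 Y Q).
Proof.
  intros hM hL hF hb hc hY hQ t s. unfold op.
  replace (x0 + RI (fun s0 : R => Ft (Y s0) (Q s0)) 0 (ct t) -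
    (x0 + RI (fun s0 : R => Ft (Y s0) (Q s0)) 0 (ct s))) with
    (RI (fun s0 : R => Ft (Y s0) (Q s0)) 0 (ct t) - RI (fun s0 : R => Ft (Y s0) (Q s0)) 0 (ct s)) by ring.
  rewrite rint_diff by (apply (op_cont Ft M L); auto).
  eapply Rle_trans; [apply rint_bound|].
  - apply (op_cont Ft M L); auto.
  - intros; apply hb.
  - apply Rmult_le_compat_l; auto.
Qed.

Lemma op_bound Ft ct x0 M L Y Q d t : 0 <= M -> 0 <= L -> Flip L Ft -> (forall x p, Rabs (Ft x p) <= M) ->
  Rabs (ct t) <= d -> Mlip M Y -> Mlip M Q -> Rabs (op Ft ct x0 Y Q t - x0) <= M * d.
Proof.
  intros hM hL hF hb hc hY hQ. unfold op.
  replace (x0 + RI (fun s : R => Ft (Y s) (Q s)) 0 (ct t) - x0) with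
    (RI (fun s : R => Ft (Y s) (Q s)) 0 (ct t)) by ring.
  eapply Rle_trans; [apply rint_bound|].
  - apply (op_cont Ft M L); auto.
  - intros; apply hb.
  - rewrite Rminus_0_r. apply Rmult_le_compat_l; auto.
Qed.

Lemma op_diff Ft ct x0 M L Y Q Y' Q' d D t : 0 <= M -> 0 <= L -> Flip L Ft ->
  Rabs (ct t) <= d -> Mlip M Y -> Mlip M Q -> Mlip M Y' -> Mlip M Q' ->
  (forall s, Rabs (Y s - Y' s) + Rabs (Q s - Q' s) <= D) ->
  Rabs (op Ft ct x0 Y Q t - op Ft ct x0 Y' Q' t) <= L * D * d.
Proof.
  intros hM hL hF hc hY hQ hY' hQ' hD. unfold op.
  replace (x0 + RI (fun s : R => Ft (Y s) (Q s)) 0 (ct t) -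
    (x0 + RI (fun s : R => Ft (Y' s) (Q' s)) 0 (ct t))) with
    (RI (fun s : R => Ft (Y s) (Q s)) 0 (ct t) - RI (fun s : R => Ft (Y' s) (Q' s)) 0 (ct t)) by ring.
  rewrite rint_minus by (apply (op_cont Ft M L); auto).
  eapply Rle_trans; [apply rint_bound|].
  - intros z. apply (lip_contC _ (2 * L * M + 2 * L * M)); [nra|].
    intros s.
    replace (Ft (Y s) (Q s) - Ft (Y' s) (Q' s) - (Ft (Y z) (Q z) - Ft (Y' z) (Q' z))) with
      ((Ft (Y s) (Q s) - Ft (Y z) (Q z)) - (Ft (Y' s) (Q' s) - Ft (Y' z) (Q' z))) by ring.
    eapply Rle_trans; [apply Rabs_triang|]. rewrite Rabs_Ropp.
    pose proof (hF (Y s) (Q s) (Y z) (Q z)). pose proof (hF (Y' s) (Q' s) (Y' z) (Q' z)).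
    pose proof (hY s z). pose proof (hQ s z). pose proof (hY' s z). pose proof (hQ' s z).
    pose proof (Rabs_pos (s - z)). nra.
  - intros z _. eapply Rle_trans; [apply hF|]. apply Rmult_le_compat_l; auto.
  - rewrite Rminus_0_r. pose proof (hD 0). pose proof (Rabs_pos (Y 0 - Y' 0)).
    pose proof (Rabs_pos (Q 0 - Q' 0)). apply Rmult_le_compat_l; nra.
Qed.

Lemma op_deriv Ft ct x0 M L Y Q d s : 0 <= M -> 0 <= L -> Flip L Ft -> Mlip M Y -> Mlip M Q ->
  (forall t, Rabs t < d -> ct t = t) -> Rabs s < d ->
  derivable_pt_lim (op Ft ct x0 Y Q) s (Ft (Y s) (Q s)).
Proof.
  intros hM hL hF hY hQ hct hs.
  assert (hc := op_cont Ft M L Y Q hM hL hF hY hQ).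
  apply is_derive_Reals.
  apply is_derive_ext_loc with (f := fun t => x0 + RInt (fun s => Ft (Y s) (Q s)) 0 t).
  - assert (he : 0 < d - Rabs s) by lra.
    exists (mkposreal _ he). intros t ht.
    change (Rabs (t - s) < d - Rabs s) in ht.
    unfold op, RI. rewrite hct; auto.
    pose proof (Rabs_triang_inv t s). lra.
  - apply is_derive_Reals.
    replace (Ft (Y s) (Q s)) with (0 + Ft (Y s) (Q s)) by ring.
    apply (derivable_pt_lim_plus (fun _ => x0) (fun t => RInt (fun s => Ft (Y s) (Q s)) 0 t)).
    + apply derivable_pt_lim_const.
    + apply is_derive_Reals.
      apply (is_derive_RInt (fun s => Ft (Y s) (Q s)) (fun t => RInt (fun s => Ft (Y s) (Q s)) 0 t) 0 s).
      * exists (mkposreal 1 Rlt_0_1). intros t _. apply (RInt_correct (V:=R_CompleteNormedModule)). apply exR. auto.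
      * apply hc.
Qed.

Lemma deriv_ext (f g : R -> R) x l : (forall t, f t = g t) -> derivable_pt_lim g x l -> derivable_pt_lim f x l.
Proof.
  intros he h e hep. destruct (h e hep) as [del hd]. exists del. intros hh hh0 hhd.
  rewrite !he. now apply hd.
Qed.

Lemma Rabs_le_box a x r : Rabs (x - a) <= r <-> a - r <= x <= a + r.
Proof. split; intros h; [apply Rabs_le_between in h; lra|]. apply Rabs_le; lra. Qed.

Lemma picard (F G : R -> R -> R) x0 p0 r M L :
  0 < r -> 0 <= M -> 0 <= L ->
  (forall x p, Rabs (x - x0) <= r -> Rabs (p - p0) <= r -> Rabs (F x p) <= M /\ Rabs (G x p) <= M) ->
  (forall x p y q, Rabs (x - x0) <= r -> Rabs (p - p0) <= r -> Rabs (y - x0) <= r -> Rabs (q - p0) <= r ->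
    Rabs (F x p - F y q) <= L * (Rabs (x - y) + Rabs (p - q)) /\
    Rabs (G x p - G y q) <= L * (Rabs (x - y) + Rabs (p - q))) ->
  exists d, 0 < d /\ exists Y Q : R -> R, Y 0 = x0 /\ Q 0 = p0 /\
    forall s, Rabs s < d -> Rabs (Y s - x0) <= r /\ Rabs (Q s - p0) <= r /\
      derivable_pt_lim Y s (F (Y s) (Q s)) /\ derivable_pt_lim Q s (G (Y s) (Q s)).
Proof.
  intros hr hM hL hbox hlip.
  set (cx := cl (x0 - r) (x0 + r)). set (cp := cl (p0 - r) (p0 + r)).
  assert (hcx : forall x, Rabs (cx x - x0) <= r).
  { intros x. apply Rabs_le_box. apply cl_in. lra. }
  assert (hcp : forall x, Rabs (cp x - p0) <= r).
  { intros x. apply Rabs_le_box. apply cl_in. lra. }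
  assert (hcxl : forall x y, Rabs (cx x - cx y) <= Rabs (x - y)) by (intros; apply cl_lip; lra).
  assert (hcpl : forall x y, Rabs (cp x - cp y) <= Rabs (x - y)) by (intros; apply cl_lip; lra).
  set (Ft := fun x p => F (cx x) (cp p)). set (Gt := fun x p => G (cx x) (cp p)).
  assert (hFb : forall x p, Rabs (Ft x p) <= M) by (intros; apply hbox; auto).
  assert (hGb : forall x p, Rabs (Gt x p) <= M) by (intros; apply hbox; auto).
  assert (hFl : Flip L Ft).
  { intros x p y q. eapply Rle_trans; [apply hlip; auto|].
    apply Rmult_le_compat_l; auto. apply Rplus_le_compat; auto. }
  assert (hGl : Flip L Gt).
  { intros x p y q. eapply Rle_trans; [apply hlip; auto|].
    apply Rmult_le_compat_l; auto. apply Rplus_le_compat; auto. }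
  set (d := Rmin (r / (M + 1)) (/ (4 * (L + 1)))).
  assert (hd : 0 < d).
  { apply Rmin_pos; [apply Rdiv_lt_0_compat; lra|]. apply Rinv_0_lt_compat; lra. }
  assert (hMd : M * d <= r).
  { apply Rle_trans with (M * (r / (M + 1))).
    - apply Rmult_le_compat_l; auto. apply Rmin_l.
    - apply Rle_trans with ((M + 1) * (r / (M + 1))).
      + apply Rmult_le_compat_r; [left; apply Rdiv_lt_0_compat; lra|lra].
      + right. field. lra. }
  assert (hLd : 4 * L * d <= 1).
  { apply Rle_trans with (4 * L * / (4 * (L + 1))).
    - apply Rmult_le_compat_l; [lra|]. apply Rmin_r.
    - apply Rle_trans with (4 * (L + 1) * / (4 * (L + 1))).
      + apply Rmult_le_compat_r; [left; apply Rinv_0_lt_compat; lra|lra].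
      + right. field. lra. }
  set (ct := cl (-d) d).
  assert (hct1 : forall t, Rabs (ct t) <= d).
  { intros t. replace (ct t) with (ct t - 0) by ring. apply Rabs_le_box. 
    pose proof (cl_in (-d) d t ltac:(lra)). unfold ct. lra. }
  assert (hct2 : forall t s, Rabs (ct t - ct s) <= Rabs (t - s)) by (intros; apply cl_lip; lra).
  assert (hct3 : forall t, Rabs t < d -> ct t = t).
  { intros t ht. apply cl_id. apply Rabs_def2 in ht. lra. }
  set (Phi := fun YQ : (R -> R) * (R -> R) =>
         (op Ft ct x0 (fst YQ) (snd YQ), op Gt ct p0 (fst YQ) (snd YQ))).
  set (pic := fun k => Nat.iter k Phi (fun _ => x0, fun _ => p0)).
  assert (hpicS : forall k, pic (S k) = Phi (pic k)) by reflexivity.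
  assert (hlipk : forall k, Mlip M (fst (pic k)) /\ Mlip M (snd (pic k))).
  { induction k as [|k [IH1 IH2]].
    - simpl. split; intros t s; rewrite Rminus_diag, Rabs_R0; apply Rmult_le_pos; auto; apply Rabs_pos.
    - rewrite hpicS. simpl. split.
      + apply (op_lip Ft ct x0 M L); auto.
      + apply (op_lip Gt ct p0 M L); auto. }
  set (C := 2 * M * d).
  assert (hC : 0 <= C) by (unfold C; nra).
  assert (hdiff : forall k t, Rabs (fst (pic (S k)) t - fst (pic k) t) +
                              Rabs (snd (pic (S k)) t - snd (pic k) t) <= C * (/2)^k).
  { induction k as [|k IH]; intros t.
    - simpl (pic (S O)). simpl fst. simpl snd. simpl ((/2)^0).
      pose proof (op_bound Ft ct x0 M L (fun _ => x0) (fun _ => p0) d t hM hL hFl hFb (hct1 t)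
        (proj1 (hlipk O)) (proj2 (hlipk O))).
      pose proof (op_bound Gt ct p0 M L (fun _ => x0) (fun _ => p0) d t hM hL hGl hGb (hct1 t)
        (proj1 (hlipk O)) (proj2 (hlipk O))).
      unfold C. lra.
    - assert (e1 : fst (pic (S (S k))) t = op Ft ct x0 (fst (pic (S k))) (snd (pic (S k))) t) by reflexivity.
      assert (e2 : fst (pic (S k)) t = op Ft ct x0 (fst (pic k)) (snd (pic k)) t) by reflexivity.
      assert (e3 : snd (pic (S (S k))) t = op Gt ct p0 (fst (pic (S k))) (snd (pic (S k))) t) by reflexivity.
      assert (e4 : snd (pic (S k)) t = op Gt ct p0 (fst (pic k)) (snd (pic k)) t) by reflexivity.
      rewrite e1, e2, e3, e4.
      destruct (hlipk k) as [h1 h2]. destruct (hlipk (S k)) as [h3 h4].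
      pose proof (op_diff Ft ct x0 M L (fst (pic (S k))) (snd (pic (S k))) (fst (pic k)) (snd (pic k))
        d (C * (/2)^k) t hM hL hFl (hct1 t) h3 h4 h1 h2 IH).
      pose proof (op_diff Gt ct p0 M L (fst (pic (S k))) (snd (pic (S k))) (fst (pic k)) (snd (pic k))
        d (C * (/2)^k) t hM hL hGl (hct1 t) h3 h4 h1 h2 IH).
      rewrite half_pow_S. pose proof (half_pow_pos k).
      assert (0 <= C * (/2)^k) by nra.
      assert (L * (C * (/2)^k) * d <= /4 * (C * (/2)^k)) by nra.
      lra. }
  assert (hdY : forall t k, Rabs (fst (pic (S k)) t - fst (pic k) t) <= C * (/2)^k).
  { intros t k. pose proof (hdiff k t). pose proof (Rabs_pos (snd (pic (S k)) t - snd (pic k) t)). lra. }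
  assert (hdQ : forall t k, Rabs (snd (pic (S k)) t - snd (pic k) t) <= C * (/2)^k).
  { intros t k. pose proof (hdiff k t). pose proof (Rabs_pos (fst (pic (S k)) t - fst (pic k) t)). lra. }
  set (Y := fun t => proj1_sig (geo_lim (fun k => fst (pic k) t) C hC (hdY t))).
  set (Q := fun t => proj1_sig (geo_lim (fun k => snd (pic k) t) C hC (hdQ t))).
  assert (hY : forall t m, Rabs (Y t - fst (pic m) t) <= 2 * C * (/2)^m).
  { intros t m. unfold Y. destruct geo_lim as [l hl]. simpl. apply hl. }
  assert (hQ : forall t m, Rabs (Q t - snd (pic m) t) <= 2 * C * (/2)^m).
  { intros t m. unfold Q. destruct geo_lim as [l hl]. simpl. apply hl. }
  assert (hYl : Mlip M Y).
  { intros t s. apply (le_geo _ _ (4 * C)). intros m.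
    pose proof (hY t m). pose proof (hY s m). pose proof (proj1 (hlipk m) t s).
    pose proof (tri (Y t) (fst (pic m) t) (Y s)). pose proof (tri (fst (pic m) t) (fst (pic m) s) (Y s)).
    rewrite Rabs_minus_sym in H0. lra. }
  assert (hQl : Mlip M Q).
  { intros t s. apply (le_geo _ _ (4 * C)). intros m.
    pose proof (hQ t m). pose proof (hQ s m). pose proof (proj2 (hlipk m) t s).
    pose proof (tri (Q t) (snd (pic m) t) (Q s)). pose proof (tri (snd (pic m) t) (snd (pic m) s) (Q s)).
    rewrite Rabs_minus_sym in H0. lra. }
  assert (hD : forall m s, Rabs (fst (pic m) s - Y s) + Rabs (snd (pic m) s - Q s) <= 4 * C * (/2)^m).
  { intros m s. pose proof (hY s m). pose proof (hQ s m).
    rewrite Rabs_minus_sym in H, H0. lra. }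
  assert (hYeq : forall t, Y t = op Ft ct x0 Y Q t).
  { intros t. assert (Rabs (Y t - op Ft ct x0 Y Q t) <= 0).
    { apply (le_geo _ _ (C + 4 * L * C * d)). intros m.
      pose proof (hY t (S m)). rewrite hpicS in H. simpl fst in H.
      destruct (hlipk m) as [h1 h2].
      pose proof (op_diff Ft ct x0 M L (fst (pic m)) (snd (pic m)) Y Q d (4 * C * (/2)^m) t
        hM hL hFl (hct1 t) h1 h2 hYl hQl (hD m)).
      pose proof (tri (Y t) (op Ft ct x0 (fst (pic m)) (snd (pic m)) t) (op Ft ct x0 Y Q t)).
      rewrite half_pow_S in H. lra. }
    pose proof (Rabs_pos (Y t - op Ft ct x0 Y Q t)).
    assert (Rabs (Y t - op Ft ct x0 Y Q t) = 0) by lra.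
    apply Rabs_eq_0 in H1. lra. }
  assert (hQeq : forall t, Q t = op Gt ct p0 Y Q t).
  { intros t. assert (Rabs (Q t - op Gt ct p0 Y Q t) <= 0).
    { apply (le_geo _ _ (C + 4 * L * C * d)). intros m.
      pose proof (hQ t (S m)). rewrite hpicS in H. simpl snd in H.
      destruct (hlipk m) as [h1 h2].
      pose proof (op_diff Gt ct p0 M L (fst (pic m)) (snd (pic m)) Y Q d (4 * C * (/2)^m) t
        hM hL hGl (hct1 t) h1 h2 hYl hQl (hD m)).
      pose proof (tri (Q t) (op Gt ct p0 (fst (pic m)) (snd (pic m)) t) (op Gt ct p0 Y Q t)).
      rewrite half_pow_S in H. lra. }
    pose proof (Rabs_pos (Q t - op Gt ct p0 Y Q t)).
    assert (Rabs (Q t - op Gt ct p0 Y Q t) = 0) by lra.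
    apply Rabs_eq_0 in H1. lra. }
  exists d. split; auto. exists Y, Q.
  assert (hct0 : ct 0 = 0) by (apply hct3; rewrite Rabs_R0; lra).
  split; [|split].
  - rewrite hYeq. unfold op. rewrite hct0. unfold RI. rewrite RInt_point. unfold zero; simpl. ring.
  - rewrite hQeq. unfold op. rewrite hct0. unfold RI. rewrite RInt_point. unfold zero; simpl. ring.
  - intros s hs.
    assert (hYb : Rabs (Y s - x0) <= r).
    { rewrite hYeq. eapply Rle_trans; [apply (op_bound Ft ct x0 M L Y Q d s); auto|]. auto. }
    assert (hQb : Rabs (Q s - p0) <= r).
    { rewrite hQeq. eapply Rle_trans; [apply (op_bound Gt ct p0 M L Y Q d s); auto|]. auto. }
    assert (hcxY : cx (Y s) = Y s) by (apply cl_id; apply Rabs_le_box in hYb; lra).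
    assert (hcpQ : cp (Q s) = Q s) by (apply cl_id; apply Rabs_le_box in hQb; lra).
    split; [auto|split; [auto|split]].
    + apply (deriv_ext _ _ _ _ hYeq).
      pose proof (op_deriv Ft ct x0 M L Y Q d s hM hL hFl hYl hQl hct3 hs).
      unfold Ft in H at 2. rewrite hcxY, hcpQ in H. exact H.
    + apply (deriv_ext _ _ _ _ hQeq).
      pose proof (op_deriv Gt ct p0 M L Y Q d s hM hL hGl hYl hQl hct3 hs).
      unfold Gt in H at 2. rewrite hcxY, hcpQ in H. exact H.
Qed.

Lemma Udom_open bnd eps x : 0 < eps -> Udom bnd eps x -> exists rho, 0 < rho /\ forall y, Rabs (y - x) < rho -> Udom bnd eps y.
Proof.
  intros he. destruct bnd; simpl.
  - intros h. exists (Rmin (x + 1 + eps) (1 + eps - x)). split.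
    + apply Rmin_pos; lra.
    + intros y hy. apply Rabs_def2 in hy. pose proof (Rmin_l (x + 1 + eps) (1 + eps - x)).
      pose proof (Rmin_r (x + 1 + eps) (1 + eps - x)). lra.
  - intros _. exists 1. split; auto. lra.
Qed.

Lemma local_bound U (g : R -> R -> R) x p : cont2_at U g x p ->
  exists d, 0 < d /\ forall y q, U y -> Rabs (y - x) < d -> Rabs (q - p) < d -> Rabs (g y q) <= Rabs (g x p) + 1.
Proof.
  intros h. destruct (h 1 Rlt_0_1) as [d [hd h1]]. exists d. split; auto.
  intros y q hy h2 h3. specialize (h1 y q hy h2 h3).
  pose proof (Rabs_triang_inv (g y q) (g x p)). lra.
Qed.

Lemma local_sol bnd eps H Hx Hp Hxx Hxp Hpx Hpp x0 p0 : 0 < eps ->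
  C2_on (Udom bnd eps) H Hx Hp Hxx Hxp Hpx Hpp -> Udom bnd eps x0 ->
  exists d, 0 < d /\ exists Y Q : R -> R, Y 0 = x0 /\ Q 0 = p0 /\
    forall s, Rabs s < d -> derivable_pt_lim Y s (Hp (Y s) (Q s)) /\
      derivable_pt_lim Q s (- Hx (Y s) (Q s)).
Proof.
  intros he hC hU.
  destruct (Udom_open bnd eps x0 he hU) as [rho [hrho hrho']].
  destruct (hC x0 p0 hU) as (_&_&_&_&_&_&_&cHx&cHp&cHxx&cHxp&cHpx&cHpp).
  destruct (local_bound _ _ _ _ cHx) as [d1 [hd1 b1]].
  destruct (local_bound _ _ _ _ cHp) as [d2 [hd2 b2]].
  destruct (local_bound _ _ _ _ cHxx) as [d3 [hd3 b3]].
  destruct (local_bound _ _ _ _ cHxp) as [d4 [hd4 b4]].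
  destruct (local_bound _ _ _ _ cHpx) as [d5 [hd5 b5]].
  destruct (local_bound _ _ _ _ cHpp) as [d6 [hd6 b6]].
  set (r := Rmin rho (Rmin d1 (Rmin d2 (Rmin d3 (Rmin d4 (Rmin d5 d6))))) / 2).
  assert (hr : 0 < r).
  { unfold r. apply Rdiv_lt_0_compat; [|lra]. repeat (apply Rmin_pos; auto). }
  assert (hr' : 2 * r <= rho /\ 2 * r <= d1 /\ 2 * r <= d2 /\ 2 * r <= d3 /\ 2 * r <= d4 /\ 2 * r <= d5 /\ 2 * r <= d6).
  { unfold r. replace (2 * (Rmin rho (Rmin d1 (Rmin d2 (Rmin d3 (Rmin d4 (Rmin d5 d6))))) / 2))
      with (Rmin rho (Rmin d1 (Rmin d2 (Rmin d3 (Rmin d4 (Rmin d5 d6)))))) by field.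
    repeat match goal with |- context[Rmin ?a ?b] =>
      generalize (Rmin_l a b) (Rmin_r a b); set (Rmin a b) end.
    intros; repeat split; lra. }
  destruct hr' as (r0&r1&r2&r3&r4&r5&r6).
  set (M := Rabs (Hp x0 p0) + 1 + (Rabs (Hx x0 p0) + 1)).
  set (L := (Rabs (Hxx x0 p0) + 1) + (Rabs (Hxp x0 p0) + 1) + (Rabs (Hpx x0 p0) + 1) + (Rabs (Hpp x0 p0) + 1)).
  assert (hU' : forall y, Rabs (y - x0) <= r -> Udom bnd eps y) by (intros; apply hrho'; lra).
  assert (hM : 0 <= M) by (unfold M; pose proof (Rabs_pos (Hp x0 p0)); pose proof (Rabs_pos (Hx x0 p0)); lra).
  assert (hL : 0 <= L) by (unfold L; pose proof (Rabs_pos (Hxx x0 p0)); pose proof (Rabs_pos (Hxp x0 p0));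
     pose proof (Rabs_pos (Hpx x0 p0)); pose proof (Rabs_pos (Hpp x0 p0)); lra).
  assert (hbetw : forall c a b y, Rabs (a - c) <= r -> Rabs (b - c) <= r -> Rmin a b <= y <= Rmax a b -> Rabs (y - c) <= r).
  { intros c a b y ha hb hy. apply Rabs_le_box in ha, hb. apply Rabs_le_box.
    unfold Rmin, Rmax in hy. destruct Rle_dec; lra. }
  cut (exists d, 0 < d /\ exists Y Q : R -> R, Y 0 = x0 /\ Q 0 = p0 /\
    forall s, Rabs s < d -> Rabs (Y s - x0) <= r /\ Rabs (Q s - p0) <= r /\
      derivable_pt_lim Y s (Hp (Y s) (Q s)) /\ derivable_pt_lim Q s (- Hx (Y s) (Q s))).
  { intros [d [hd [Y [Q [h0 [h1 hs]]]]]]. exists d. split; auto. exists Y, Q.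
    split; auto. split; auto. intros s hs'. apply hs; auto. }
  apply (picard Hp (fun x p => - Hx x p) x0 p0 r M L hr hM hL).
  - intros x p hx hp. split.
    + pose proof (b2 x p (hU' x hx) ltac:(lra) ltac:(lra)). unfold M. pose proof (Rabs_pos (Hx x0 p0)). lra.
    + rewrite Rabs_Ropp. pose proof (b1 x p (hU' x hx) ltac:(lra) ltac:(lra)). unfold M.
      pose proof (Rabs_pos (Hp x0 p0)). lra.
  - intros x p y q hx hp hy hq.
    assert (lx : forall (g gx : R -> R -> R) B, (forall a b, Udom bnd eps a -> derivable_pt_lim (fun z => g z b) a (gx a b)) ->
              (forall a b, Rabs (a - x0) <= r -> Rabs (b - p0) <= r -> Rabs (gx a b) <= B) ->
              Rabs (g x p - g y p) <= B * Rabs (x - y)).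
    { intros g gx B hd hb.
      apply (deriv_lip (fun z => g z p) (fun z => gx z p) y x B).
      - intros z hz. apply hd. apply hU'. eapply hbetw; [apply hy|apply hx|auto].
      - intros z hz. apply hb; auto. eapply hbetw; [apply hy|apply hx|auto]. }
    assert (lp : forall (g gp : R -> R -> R) B, (forall a b, Udom bnd eps a -> derivable_pt_lim (fun z => g a z) b (gp a b)) ->
              (forall a b, Rabs (a - x0) <= r -> Rabs (b - p0) <= r -> Rabs (gp a b) <= B) ->
              Rabs (g y p - g y q) <= B * Rabs (p - q)).
    { intros g gp B hd hb.
      apply (deriv_lip (fun z => g y z) (fun z => gp y z) q p B).
      - intros z hz. apply hd. apply hU'. auto.
      - intros z hz. apply hb; auto. eapply hbetw; [apply hq|apply hp|auto]. }
    assert (dHpx : forall a b, Udom bnd eps a -> derivable_pt_lim (fun z => Hp z b) a (Hpx a b)) by (intros a b ha; apply (hC a b ha)).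
    assert (dHpp : forall a b, Udom bnd eps a -> derivable_pt_lim (fun z => Hp a z) b (Hpp a b)) by (intros a b ha; apply (hC a b ha)).
    assert (dHxx : forall a b, Udom bnd eps a -> derivable_pt_lim (fun z => Hx z b) a (Hxx a b)) by (intros a b ha; apply (hC a b ha)).
    assert (dHxp : forall a b, Udom bnd eps a -> derivable_pt_lim (fun z => Hx a z) b (Hxp a b)) by (intros a b ha; apply (hC a b ha)).
    pose proof (lx Hp Hpx _ dHpx (fun a b ha hb => b5 a b (hU' a ha) ltac:(lra) ltac:(lra))).
    pose proof (lp Hp Hpp _ dHpp (fun a b ha hb => b6 a b (hU' a ha) ltac:(lra) ltac:(lra))).
    pose proof (lx Hx Hxx _ dHxx (fun a b ha hb => b3 a b (hU' a ha) ltac:(lra) ltac:(lra))).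
    pose proof (lp Hx Hxp _ dHxp (fun a b ha hb => b4 a b (hU' a ha) ltac:(lra) ltac:(lra))).
    pose proof (tri (Hp x p) (Hp y p) (Hp y q)). pose proof (tri (Hx x p) (Hx y p) (Hx y q)).
    pose proof (Rabs_pos (x - y)). pose proof (Rabs_pos (p - q)).
    pose proof (Rabs_pos (Hxx x0 p0)). pose proof (Rabs_pos (Hxp x0 p0)).
    pose proof (Rabs_pos (Hpx x0 p0)). pose proof (Rabs_pos (Hpp x0 p0)).
    replace (- Hx x p - - Hx y q) with (- (Hx x p - Hx y q)) by ring. rewrite Rabs_Ropp.
    unfold L. split; nra.
Qed.

Lemma left_limit_bound (f df : R -> R) T L a h e :
  h < 0 -> 0 <= e ->
  (forall t, T + h <= t < T -> derivable_pt_lim f t (df t)) ->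
  (forall t, T + h <= t < T -> Rabs (df t - L) <= e) ->
  (forall eta, 0 < eta -> exists d, 0 < d /\ forall t, T - d < t < T -> Rabs (f t - a) < eta) ->
  Rabs (a - f (T + h) - L * (- h)) <= e * Rabs h.
Proof.
  intros hh he hd hb hl.
  apply le_epsilon. intros eta heta.
  set (eta' := eta / (1 + Rabs L)).
  assert (heta' : 0 < eta') by (unfold eta'; apply Rdiv_lt_0_compat; [auto|pose proof (Rabs_pos L); lra]).
  destruct (hl eta' heta') as [d [hd0 hd1]].
  set (t := T - Rmin (Rmin (d/2) eta') (- h / 2)).
  assert (hm1 := Rmin_l (Rmin (d/2) eta') (- h / 2)). assert (hm2 := Rmin_r (Rmin (d/2) eta') (- h / 2)).
  assert (hm3 := Rmin_l (d/2) eta'). assert (hm4 := Rmin_r (d/2) eta').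
  assert (hm0 : 0 < Rmin (Rmin (d/2) eta') (- h / 2)) by (repeat apply Rmin_pos; lra).
  assert (ht : T + h < t < T) by (unfold t; lra).
  pose proof (hd1 t ltac:(unfold t; lra)).
  pose proof (mvt_bound f df (T + h) t L e) as hm.
  rewrite Rmin_left, Rmax_right in hm by lra.
  specialize (hm ltac:(intros; apply hd; lra) ltac:(intros; apply hb; lra)).
  rewrite (Rabs_right (t - (T + h))) in hm by lra.
  replace (a - f (T + h) - L * - h) with ((a - f t) + (f t - f (T + h) - L * (t - (T + h))) + L * (t - T)) by ring.
  eapply Rle_trans; [apply Rabs_triang|].
  eapply Rle_trans; [apply Rplus_le_compat; [apply Rabs_triang|right; apply Rabs_mult]|].
  rewrite Rabs_minus_sym in H.
  rewrite (Rabs_left h) by lra.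
  rewrite (Rabs_left (t - T)) by lra.
  assert (T - t <= eta') by (unfold t; lra).
  assert (Rabs L * (T - t) <= Rabs L * eta') by (apply Rmult_le_compat_l; [apply Rabs_pos|lra]).
  assert (e * (t - (T + h)) <= e * - h) by (apply Rmult_le_compat_l; lra).
  assert (eta' + Rabs L * eta' = eta) by (unfold eta'; field; pose proof (Rabs_pos L); lra).
  lra.
Qed.

Lemma glue_deriv (f g df : R -> R) T L a :
  (exists d0, 0 < d0 /\ forall t, T - d0 < t < T -> derivable_pt_lim f t (df t)) ->
  (forall e, 0 < e -> exists d, 0 < d /\ forall t, T - d < t < T -> Rabs (df t - L) < e) ->
  (forall e, 0 < e -> exists d, 0 < d /\ forall t, T - d < t < T -> Rabs (f t - a) < e) ->
  derivable_pt_lim g 0 L -> g 0 = a ->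
  derivable_pt_lim (fun s => if Rlt_dec s T then f s else g (s - T)) T L.
Proof.
  intros [d0 [hd0 hfd]] hdf hf hg hg0 e he.
  destruct (hg e he) as [dg hdg].
  destruct (hdf (e / 2) ltac:(lra)) as [d1 [hd1 hd1']].
  assert (hdel : 0 < Rmin dg (Rmin d1 d0)) by (repeat apply Rmin_pos; auto; apply cond_pos).
  exists (mkposreal _ hdel). intros h hh0 hh. simpl in hh.
  assert (hm1 := Rmin_l dg (Rmin d1 d0)). assert (hm2 := Rmin_r dg (Rmin d1 d0)).
  assert (hm3 := Rmin_l d1 d0). assert (hm4 := Rmin_r d1 d0).
  destruct (Rlt_dec T T) as [c|_]; [lra|].
  replace (T - T) with 0 by ring. rewrite hg0.
  destruct (Rlt_dec (T + h) T) as [hlt|hge].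
  - assert (hneg : h < 0) by lra.
    apply Rabs_def2 in hh.
    pose proof (left_limit_bound f df T L a h (e / 2) hneg ltac:(lra)
      ltac:(intros; apply hfd; lra) ltac:(intros; left; apply hd1'; lra) hf) as hb.
    replace ((f (T + h) - a) / h - L) with ((a - f (T + h) - L * - h) / (- h)) by (field; lra).
    unfold Rdiv. rewrite Rabs_mult, Rabs_inv, (Rabs_left h) in * by lra.
    rewrite (Rabs_right (-h)) by lra.
    apply Rle_lt_trans with (e / 2 * - h * / - h).
    + apply Rmult_le_compat_r; [left; apply Rinv_0_lt_compat; lra|lra].
    + replace (e / 2 * - h * / - h) with (e / 2) by (field; lra). lra.
  - assert (hpos : 0 < h) by (destruct (Rtotal_order h 0) as [|[|]]; lra).
    replace (T + h - T) with (0 + h) by ring. rewrite <- hg0. apply hdg; auto.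
    eapply Rlt_le_trans; [apply hh|]. auto.
Qed.

Lemma deriv_ext_loc (f g : R -> R) x l d : 0 < d -> (forall t, Rabs (t - x) < d -> f t = g t) ->
  derivable_pt_lim g x l -> derivable_pt_lim f x l.
Proof.
  intros hd he h e hep. destruct (h e hep) as [del hdel].
  assert (hm : 0 < Rmin del d) by (apply Rmin_pos; [apply cond_pos|auto]).
  exists (mkposreal _ hm). intros hh hh0 hhd. simpl in hhd.
  pose proof (Rmin_l del d). pose proof (Rmin_r del d).
  rewrite !he. apply hdel; auto; lra.
  rewrite Rminus_diag, Rabs_R0; lra.
  replace (x + hh - x) with hh by ring. lra.
Qed.

Lemma deriv_shift (Y : R -> R) c u l : derivable_pt_lim Y (u - c) l ->
  derivable_pt_lim (fun s => Y (s - c)) u l.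
Proof.
  intros h e he. destruct (h e he) as [del hdel]. exists del. intros hh hh0 hhd.
  replace (u + hh - c) with (u - c + hh) by ring. now apply hdel.
Qed.

Lemma deriv_sign_neg (Y : R -> R) c : derivable_pt_lim Y 0 c -> c < 0 ->
  exists d, 0 < d /\ forall u, 0 < u < d -> Y u < Y 0.
Proof.
  intros h hc. destruct (h (- c) ltac:(lra)) as [del hdel]. exists del. split; [apply cond_pos|].
  intros u hu. assert (hu0 : u <> 0) by lra.
  specialize (hdel u hu0 ltac:(rewrite Rabs_right; lra)).
  rewrite Rplus_0_l in hdel. apply Rabs_def2 in hdel.
  assert ((Y u - Y 0) / u < 0) by lra.
  assert (Y u - Y 0 = (Y u - Y 0) / u * u) by (field; lra).
  nra.
Qed.

Lemma deriv_sign_pos (Y : R -> R) c : derivable_pt_lim Y 0 c -> 0 < c ->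
  exists d, 0 < d /\ forall u, 0 < u < d -> Y 0 < Y u.
Proof.
  intros h hc. destruct (h c ltac:(lra)) as [del hdel]. exists del. split; [apply cond_pos|].
  intros u hu. assert (hu0 : u <> 0) by lra.
  specialize (hdel u hu0 ltac:(rewrite Rabs_right; lra)).
  rewrite Rplus_0_l in hdel. apply Rabs_def2 in hdel.
  assert (0 < (Y u - Y 0) / u) by lra.
  assert (Y u - Y 0 = (Y u - Y 0) / u * u) by (field; lra).
  nra.
Qed.

Lemma cont_near (Y : R -> R) c e : derivable_pt_lim Y 0 c -> 0 < e ->
  exists d, 0 < d /\ forall u, Rabs u < d -> Rabs (Y u - Y 0) < e.
Proof.
  intros h he. pose proof (deriv_cont Y 0 c h) as hc.
  destruct (hc e he) as [d [hd hd']]. exists d. split; auto.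
  intros u hu. destruct (Req_dec u 0) as [->|hu0]; [rewrite Rminus_diag, Rabs_R0; lra|].
  apply (hd' u). split; [split; [exact I|auto]|]. simpl. unfold R_dist. rewrite Rminus_0_r. auto.
Qed.

Lemma stay_K (Y : R -> R) xh c : -1 <= xh <= 1 -> Y 0 = xh -> derivable_pt_lim Y 0 c ->
  (xh = 1 -> c < 0) -> (xh = -1 -> 0 < c) ->
  exists d, 0 < d /\ forall u, 0 <= u < d -> -1 <= Y u <= 1.
Proof.
  intros hx hY0 hd h1 h2.
  destruct (Req_dec xh 1) as [e1|n1].
  - destruct (deriv_sign_neg Y c hd (h1 e1)) as [d1 [hd1 hd1']].
    destruct (cont_near Y c 1 hd ltac:(lra)) as [d2 [hd2 hd2']].
    exists (Rmin d1 d2). split; [apply Rmin_pos; auto|].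
    intros u hu. pose proof (Rmin_l d1 d2). pose proof (Rmin_r d1 d2).
    destruct (Req_dec u 0) as [->|hu0]; [lra|].
    specialize (hd1' u ltac:(lra)). specialize (hd2' u ltac:(rewrite Rabs_right; lra)).
    apply Rabs_def2 in hd2'. lra.
  - destruct (Req_dec xh (-1)) as [e2|n2].
    + destruct (deriv_sign_pos Y c hd (h2 e2)) as [d1 [hd1 hd1']].
      destruct (cont_near Y c 1 hd ltac:(lra)) as [d2 [hd2 hd2']].
      exists (Rmin d1 d2). split; [apply Rmin_pos; auto|].
      intros u hu. pose proof (Rmin_l d1 d2). pose proof (Rmin_r d1 d2).
      destruct (Req_dec u 0) as [->|hu0]; [lra|].
      specialize (hd1' u ltac:(lra)). specialize (hd2' u ltac:(rewrite Rabs_right; lra)).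
      apply Rabs_def2 in hd2'. lra.
    + assert (hm : 0 < Rmin (xh + 1) (1 - xh)) by (apply Rmin_pos; lra).
      destruct (cont_near Y c _ hd hm) as [d2 [hd2 hd2']].
      exists d2. split; auto. intros u hu.
      specialize (hd2' u ltac:(rewrite Rabs_right; lra)).
      pose proof (Rmin_l (xh + 1) (1 - xh)). pose proof (Rmin_r (xh + 1) (1 - xh)).
      apply Rabs_def2 in hd2'. lra.
Qed.

Lemma Kdom_U bnd eps x : 0 < eps -> Kdom bnd x -> Udom bnd eps x.
Proof. destruct bnd; simpl; auto. lra. Qed.

Lemma lim_left_pos f T l : 0 < T -> lim_left f T l ->
  forall e, 0 < e -> exists d, 0 < d /\ forall t, T - d < t < T -> Rabs (f t - l) < e.
Proof.
  intros hT h e he. destruct (h e he) as [d [hd hd']]. exists (Rmin d T).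
  split; [apply Rmin_pos; auto|]. intros t ht. pose proof (Rmin_l d T). pose proof (Rmin_r d T).
  apply hd'; lra.
Qed.

Lemma comp_lim U (g : R -> R -> R) X P T xh ph : 0 < T -> cont2_at U g xh ph ->
  (forall t, 0 <= t < T -> U (X t)) -> lim_left X T xh -> lim_left P T ph ->
  forall e, 0 < e -> exists d, 0 < d /\ forall t, T - d < t < T -> Rabs (g (X t) (P t) - g xh ph) < e.
Proof.
  intros hT hc hU hX hP e he. destruct (hc e he) as [dl [hdl hdl']].
  destruct (lim_left_pos X T xh hT hX dl hdl) as [d1 [hd1 hd1']].
  destruct (lim_left_pos P T ph hT hP dl hdl) as [d2 [hd2 hd2']].
  exists (Rmin T (Rmin d1 d2)). split; [repeat apply Rmin_pos; auto|].
  intros t ht. pose proof (Rmin_l T (Rmin d1 d2)). pose proof (Rmin_r T (Rmin d1 d2)).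
  pose proof (Rmin_l d1 d2). pose proof (Rmin_r d1 d2).
  apply hdl'. apply hU; lra. apply hd1'; lra. apply hd2'; lra.
Qed.

Lemma ext_contra bnd eps H Hx Hp Hxx Hxp Hpx Hpp x p T X P xh ph :
  0 < eps -> C2_on (Udom bnd eps) H Hx Hp Hxx Hxp Hpx Hpp -> 0 < T ->
  ham_maximal bnd Hx Hp x p T X P -> lim_left X T xh -> lim_left P T ph -> Kdom bnd xh ->
  (bnd = true -> xh = 1 -> Hp 1 ph < 0) -> (bnd = true -> xh = -1 -> 0 < Hp (-1) ph) -> False.
Proof.
  intros he hC hT [hsol hnot] hlX hlP hK h1 h2.
  destruct hsol as (hX0 & hP0 & hKd & hder & hrc).
  assert (hUx : Udom bnd eps xh) by (apply Kdom_U; auto).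
  destruct (local_sol bnd eps H Hx Hp Hxx Hxp Hpx Hpp xh ph he hC hUx)
    as [d [hd [Y [Q [hY0 [hQ0 hYQ]]]]]].
  assert (hd0 : Rabs 0 < d) by (rewrite Rabs_R0; lra).
  assert (hY'0 : derivable_pt_lim Y 0 (Hp xh ph)).
  { pose proof (proj1 (hYQ 0 hd0)). rewrite hY0, hQ0 in H0. exact H0. }
  assert (hQ'0 : derivable_pt_lim Q 0 (- Hx xh ph)).
  { pose proof (proj2 (hYQ 0 hd0)). rewrite hY0, hQ0 in H0. exact H0. }
  assert (hK2 : exists dk, 0 < dk /\ forall u, 0 <= u < dk -> Kdom bnd (Y u)).
  { destruct bnd.
    - simpl in hK. destruct (stay_K Y xh (Hp xh ph) hK hY0 hY'0) as [dk [hdk hdk']].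
      + intros e1. rewrite e1. now apply h1.
      + intros e1. rewrite e1. now apply h2.
      + exists dk. split; auto.
    - exists 1. split; [lra|]. intros; simpl; trivial. }
  destruct hK2 as [dk [hdk hdk']].
  set (de := Rmin d dk / 2).
  assert (hde : 0 < de) by (unfold de; apply Rdiv_lt_0_compat; [apply Rmin_pos|]; lra).
  assert (hde1 : de < d) by (unfold de; pose proof (Rmin_l d dk); lra).
  assert (hde2 : de < dk) by (unfold de; pose proof (Rmin_r d dk); lra).
  apply hnot. exists (T + de), (fun s => if Rlt_dec s T then X s else Y (s - T)),
    (fun s => if Rlt_dec s T then P s else Q (s - T)).
  split; [lra|].
  split; [destruct (Rlt_dec 0 T); [auto|lra]|].
  split; [destruct (Rlt_dec 0 T); [auto|lra]|].
  split.
  { intros s hs. destruct (Rlt_dec s T). apply hKd; lra. apply hdk'; lra. }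
  split.
  { intros s hs. destruct (Rtotal_order s T) as [hlt|[heq|hgt]].
    - destruct (Rlt_dec s T) as [_|c]; [|lra].
      destruct (hder s ltac:(lra)) as [dX dP].
      split.
      + apply (deriv_ext_loc _ X s _ (T - s)); [lra| |auto].
        intros t ht. apply Rabs_def2 in ht. destruct (Rlt_dec t T); [auto|lra].
      + apply (deriv_ext_loc _ P s _ (T - s)); [lra| |auto].
        intros t ht. apply Rabs_def2 in ht. destruct (Rlt_dec t T); [auto|lra].
    - subst s. destruct (Rlt_dec T T) as [c|_]; [lra|].
      rewrite Rminus_diag, hY0, hQ0.
      assert (hU : forall t, 0 <= t < T -> Udom bnd eps (X t)) by (intros; apply Kdom_U; auto).
      destruct (hC xh ph hUx) as (_&_&_&_&_&_&_&cHx&cHp&_).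
      split.
      + apply (glue_deriv X Y (fun t => Hp (X t) (P t)) T (Hp xh ph) xh).
        * exists T. split; auto. intros t ht. apply hder. lra.
        * apply (comp_lim _ Hp X P T xh ph hT cHp hU hlX hlP).
        * apply (lim_left_pos X T xh hT hlX).
        * exact hY'0.
        * exact hY0.
      + apply (glue_deriv P Q (fun t => - Hx (X t) (P t)) T (- Hx xh ph) ph).
        * exists T. split; auto. intros t ht. apply hder. lra.
        * intros e0 he0. destruct (comp_lim _ Hx X P T xh ph hT cHx hU hlX hlP e0 he0) as [d1 [hd1 hd1']].
          exists d1. split; auto. intros t ht.
          replace (- Hx (X t) (P t) - - Hx xh ph) with (- (Hx (X t) (P t) - Hx xh ph)) by ring.
          rewrite Rabs_Ropp. auto.
        * apply (lim_left_pos P T ph hT hlP).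
        * exact hQ'0.
        * exact hQ0.
    - destruct (Rlt_dec s T) as [c|_]; [lra|].
      assert (hs' : Rabs (s - T) < d) by (rewrite Rabs_right; lra).
      destruct (hYQ (s - T) hs') as [dY dQ].
      split.
      + apply (deriv_ext_loc _ (fun s => Y (s - T)) s _ (s - T)); [lra| |].
        * intros t ht. apply Rabs_def2 in ht. destruct (Rlt_dec t T); [lra|auto].
        * now apply deriv_shift.
      + apply (deriv_ext_loc _ (fun s => Q (s - T)) s _ (s - T)); [lra| |].
        * intros t ht. apply Rabs_def2 in ht. destruct (Rlt_dec t T); [lra|auto].
        * now apply deriv_shift. }
  intros e0 he0. destruct (hrc e0 he0) as [d1 [hd1 hd1']].
  exists (Rmin d1 T). split; [apply Rmin_pos; auto|].
  intros s hs hs'. pose proof (Rmin_l d1 T). pose proof (Rmin_r d1 T).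
  destruct (Rlt_dec s T) as [_|c]; [|lra]. apply hd1'; lra.
Qed.

Definition sumb (f : R * (R * unit) -> R) (l : list (R * (R * unit))) :=
  fold_right (fun t acc => f t + acc) 0 l.

Lemma sumb_pos f l : (forall t, 0 <= f t) -> 0 <= sumb f l.
Proof. intros h. induction l; simpl; [lra|]. pose proof (h a). fold (sumb f l). lra. Qed.

Lemma sumb_ge f l : (forall t, 0 <= f t) -> forall t, In t l -> f t <= sumb f l.
Proof.
  intros h. induction l as [|t0 l IH]; simpl; [tauto|].
  intros t [<-|ht]; fold (sumb f l).
  - pose proof (sumb_pos f l h). lra.
  - pose proof (IH t ht). pose proof (h t0). lra.
Qed.

Lemma bound2 U (g : R -> R -> R) a b c d : (forall x, a <= x <= b -> U x) ->
  (forall x p, U x -> cont2_at U g x p) ->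
  exists M, forall x p, a <= x <= b -> c <= p <= d -> Rabs (g x p) <= M.
Proof.
  intros hU hc.
  assert (hex : forall t : Compactness.Tn 2 R, exists del : posreal,
    U (fst t) -> forall y q, U y -> Rabs (y - fst t) < del -> Rabs (q - fst (snd t)) < del ->
      Rabs (g y q - g (fst t) (fst (snd t))) < 1).
  { intros [u [v []]]. simpl. destruct (classic (U u)) as [hu|hu].
    - destruct (hc u v hu 1 Rlt_0_1) as [del [hdel hdel']].
      exists (mkposreal _ hdel). intros _. exact hdel'.
    - exists (mkposreal 1 Rlt_0_1). intros h; contradiction. }
  set (delta := fun t => proj1_sig (constructive_indefinite_description _ (hex t))).
  assert (hdelta : forall t, U (fst t) -> forall y q, U y -> Rabs (y - fst t) < delta t ->
     Rabs (q - fst (snd t)) < delta t -> Rabs (g y q - g (fst t) (fst (snd t))) < 1).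
  { intros t. unfold delta. destruct constructive_indefinite_description as [del hdel]. exact hdel. }
  pose proof (compactness_list 2 (a, (c, tt)) (b, (d, tt)) delta) as hl.
  apply NNPP in hl. destruct hl as [l hl].
  set (f := fun t : R * (R * unit) => Rabs (g (fst t) (fst (snd t))) + 1).
  assert (hf : forall t, 0 <= f t) by (intros t; unfold f; pose proof (Rabs_pos (g (fst t) (fst (snd t)))); lra).
  set (M := sumb f l).
  assert (hM : forall t, In t l -> f t <= M) by (intros; apply sumb_ge; auto).
  exists M. intros x p hx hp.
  destruct (hl (x, (p, tt))) as [[u [v []]] [hin [hb hcl]]].
  { simpl. tauto. }
  simpl in hb, hcl.
  pose proof (hM _ hin). unfold f in H. simpl in H.
  assert (Rabs (g x p - g u v) < 1).
  { apply (hdelta (u, (v, tt))); simpl; try tauto.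
    - apply hU; tauto.
    - apply hU; tauto. }
  pose proof (Rabs_triang_inv (g x p) (g u v)). lra.
Qed.

Lemma cont_eps (g : R -> R) z e : continuity_pt g z -> 0 < e ->
  exists a, 0 < a /\ forall x, Rabs (x - z) < a -> Rabs (g x - g z) < e.
Proof.
  intros hc he. destruct (hc e he) as [a [ha ha']]. exists a. split; auto.
  intros x hx. destruct (Req_dec x z) as [->|hxz]; [rewrite Rminus_diag, Rabs_R0; lra|].
  apply (ha' x). split; [split; [exact I|auto]|]. simpl. unfold R_dist. auto.
Qed.

Lemma cont_ind (g : R -> R) t0 T1 K K' : t0 < T1 -> K' < K ->
  (forall s, t0 <= s < T1 -> continuity_pt g s) -> g t0 < K ->
  (forall s, t0 <= s < T1 -> (forall u, t0 <= u <= s -> g u <= K) -> g s <= K') ->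
  forall s, t0 <= s < T1 -> g s <= K'.
Proof.
  intros hT hK hc hg0 hyp.
  set (B := fun s => t0 <= s /\ s < T1 /\ forall u, t0 <= u <= s -> g u <= K).
  assert (hB0 : B t0).
  { split; [lra|split; [lra|]]. intros u hu. replace u with t0 by lra. lra. }
  assert (hbd : bound B) by (exists T1; intros s [_ [hs _]]; lra).
  destruct (completeness B hbd (ex_intro _ t0 hB0)) as [sg [hub hlub]].
  assert (hsg0 : t0 <= sg) by (apply hub; auto).
  assert (hsg1 : sg <= T1) by (apply hlub; intros s [_ [hs _]]; lra).
  assert (hA : forall u, t0 <= u < sg -> g u <= K).
  { intros u hu. destruct (classic (exists s, B s /\ u < s)) as [[s [[hs1 [hs2 hs3]] hus]]|hn].
    - apply hs3; lra.
    - exfalso. assert (is_upper_bound B u).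
      { intros s hs. destruct (Rle_dec s u); auto. exfalso. apply hn. exists s. split; auto. lra. }
      pose proof (hlub u H). lra. }
  assert (hsgT : sg = T1).
  { destruct (Req_dec sg T1) as [|hne]; auto. exfalso.
    assert (hlt : sg < T1) by lra.
    assert (hgs : g sg <= K).
    { destruct (Req_dec sg t0) as [->|hne0]; [lra|].
      destruct (Rle_dec (g sg) K) as [|hn]; auto. exfalso.
      destruct (cont_eps g sg (g sg - K) (hc sg ltac:(lra)) ltac:(lra)) as [a [ha ha']].
      set (u := Rmax t0 (sg - a / 2)).
      assert (hu : t0 <= u < sg).
      { unfold u. unfold Rmax. destruct Rle_dec; lra. }
      pose proof (hA u hu).
      assert (Rabs (u - sg) < a) by (rewrite Rabs_left by lra; unfold u, Rmax; destruct Rle_dec; lra).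
      pose proof (ha' u H0). apply Rabs_def2 in H1. lra. }
    assert (hgs' : g sg <= K').
    { apply hyp; [lra|]. intros u hu. destruct (Req_dec u sg) as [->|]; auto. apply hA. lra. }
    destruct (cont_eps g sg (K - K') (hc sg ltac:(lra)) ltac:(lra)) as [a [ha ha']].
    set (s' := Rmin (sg + a / 2) ((sg + T1) / 2)).
    assert (hs' : sg < s' < T1).
    { unfold s', Rmin. destruct Rle_dec; lra. }
    assert (B s').
    { split; [lra|split; [lra|]]. intros u hu.
      destruct (Rlt_dec u sg) as [hl|hl]; [apply hA; lra|].
      assert (Rabs (u - sg) < a).
      { rewrite Rabs_right by lra. unfold s', Rmin in hu. destruct Rle_dec in hu; lra. }
      pose proof (ha' u H). apply Rabs_def2 in H0. lra. }
    pose proof (hub s' H). lra. }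
  intros s hs. apply hyp; auto. intros u hu. apply hA. lra.
Qed.

Lemma lip_lim (f : R -> R) t0 T M : t0 < T -> 0 <= M ->
  (forall s s', t0 <= s < T -> t0 <= s' < T -> Rabs (f s - f s') <= M * Rabs (s - s')) ->
  exists l, lim_left f T l.
Proof.
  intros hT hM hl.
  set (sq := fun k => T - (T - t0) * (/2)^k).
  assert (hsq : forall k, t0 <= sq k < T).
  { intros k. unfold sq. pose proof (half_pow_pos k). pose proof (half_pow_le1 k).
    assert ((T - t0) * (/2)^k <= T - t0) by (assert (0 < T - t0) by lra; nra).
    assert (0 < (T - t0) * (/2)^k) by (apply Rmult_lt_0_compat; lra). lra. }
  set (C := M * (T - t0)).
  assert (hC : 0 <= C) by (unfold C; nra).
  assert (hstep : forall k, Rabs (f (sq (S k)) - f (sq k)) <= C * (/2)^k).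
  { intros k. eapply Rle_trans; [apply hl; apply hsq|].
    unfold sq. rewrite half_pow_S.
    replace (T - (T - t0) * (/ 2 * (/ 2) ^ k) - (T - (T - t0) * (/ 2) ^ k)) with ((T - t0) * (/2)^k / 2) by field.
    pose proof (half_pow_pos k). assert (0 < (T - t0) * (/2)^k) by (apply Rmult_lt_0_compat; lra).
    rewrite Rabs_right by lra. unfold C. replace (M * (T - t0) * (/2)^k) with (M * ((T - t0) * (/2)^k)) by ring. nra. }
  destruct (geo_lim (fun k => f (sq k)) C hC hstep) as [l hlim].
  exists l. intros e he.
  destruct (pow_lt_1_zero (/2) ltac:(rewrite Rabs_right; lra) (e / (3 * C + 1))) as [N hN].
  { apply Rdiv_lt_0_compat; lra. }
  specialize (hN N (le_n _)). rewrite Rabs_right in hN by (left; apply half_pow_pos).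
  exists ((T - t0) * (/2)^N). split; [pose proof (half_pow_pos N); apply Rmult_lt_0_compat; lra|].
  intros t ht1 ht2.
  assert (hts : sq N <= t) by (unfold sq; lra).
  pose proof (hlim N). simpl in H.
  pose proof (hl t (sq N) ltac:(pose proof (hsq N); lra) (hsq N)).
  rewrite (Rabs_right (t - sq N)) in H0 by lra.
  assert (t - sq N <= (T - t0) * (/2)^N) by (unfold sq; lra).
  assert (M * (t - sq N) <= C * (/2)^N).
  { replace (C * (/2)^N) with (M * ((T - t0) * (/2)^N)) by (unfold C; ring).
    apply Rmult_le_compat_l; lra. }
  pose proof (tri (f t) (f (sq N)) l).
  rewrite (Rabs_minus_sym (f (sq N)) l) in H3.
  assert ((3 * C + 1) * (/2)^N < (3 * C + 1) * (e / (3 * C + 1))) by (apply Rmult_lt_compat_l; lra).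
  replace ((3 * C + 1) * (e / (3 * C + 1))) with e in H4 by (field; lra).
  pose proof (half_pow_pos N). nra.
Qed.

Lemma lim_bounds (f : R -> R) t0 T l lo hi : 0 <= t0 -> t0 < T -> lim_left f T l ->
  (forall s, t0 <= s < T -> lo <= f s <= hi) -> lo <= l <= hi.
Proof.
  intros h0 hT hl hb.
  assert (forall e, 0 < e -> lo - e <= l <= hi + e).
  { intros e he. destruct (hl e he) as [d [hd hd']].
    set (t := Rmax t0 (T - d / 2)).
    assert (ht : t0 <= t < T /\ T - d < t) by (unfold t, Rmax; destruct Rle_dec; lra).
    pose proof (hd' t ltac:(lra) ltac:(lra)). pose proof (hb t ltac:(lra)).
    apply Rabs_def2 in H. lra. }
  split; apply le_epsilon; intros e he; pose proof (H e he); lra.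
Qed.

Lemma cont_absdiff (f : R -> R) k s : continuity_pt f s -> continuity_pt (fun u => Rabs (f u - k)) s.
Proof.
  intros h. apply (continuity_pt_comp (fun u => f u - k) Rabs).
  - apply (continuity_pt_minus f (fun _ => k)); auto. apply continuity_pt_const. intros ? ?; auto.
  - apply Rcontinuity_abs.
Qed.

Lemma no_return bnd eps H Hx Hp Hxx Hxp Hpx Hpp x p T X P a b c d :
  0 < eps -> C2_on (Udom bnd eps) H Hx Hp Hxx Hxp Hpx Hpp -> 0 < T ->
  ham_maximal bnd Hx Hp x p T X P -> Kdom bnd a -> Kdom bnd b ->
  (bnd = true -> forall q, Hp 1 q < 0) -> (bnd = true -> forall q, 0 < Hp (-1) q) ->
  (forall eta, 0 < eta -> exists t, 0 <= t < T /\ T - eta < t /\ a <= X t <= b /\ c <= P t <= d) ->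
  False.
Proof.
  intros he hC hT hmax ha hb hb1 hb2 hret.
  pose proof hmax as [(hX0 & hP0 & hKd & hder & hrc) _].
  set (rho := eps / 2).
  assert (hrho : 0 < rho) by (unfold rho; lra).
  assert (hU : forall y, a - rho <= y <= b + rho -> Udom bnd eps y).
  { intros y hy. destruct bnd; simpl in *; auto. unfold rho in hy. lra. }
  assert (hcont : forall g, (forall x p, Udom bnd eps x -> cont2_at (Udom bnd eps) g x p) ->
     exists M, forall x p, a - rho <= x <= b + rho -> c - rho <= p <= d + rho -> Rabs (g x p) <= M).
  { intros g hg. apply (bound2 (Udom bnd eps)); auto. }
  destruct (hcont Hp) as [M1 hM1]. { intros y q hy. apply (hC y q hy). }
  destruct (hcont Hx) as [M2 hM2]. { intros y q hy. apply (hC y q hy). }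
  set (M := Rmax (Rmax M1 M2) 0).
  assert (hM : 0 <= M) by apply Rmax_r.
  assert (hMb : forall x p, a - rho <= x <= b + rho -> c - rho <= p <= d + rho ->
     Rabs (Hp x p) <= M /\ Rabs (- Hx x p) <= M).
  { intros y q hy hq. rewrite Rabs_Ropp. unfold M.
    pose proof (hM1 y q hy hq). pose proof (hM2 y q hy hq).
    pose proof (Rmax_l (Rmax M1 M2) 0). pose proof (Rmax_l M1 M2). pose proof (Rmax_r M1 M2). lra. }
  set (eta := Rmin (T / 2) (rho / (4 * M + 1))).
  assert (heta : 0 < eta) by (unfold eta; apply Rmin_pos; [lra|apply Rdiv_lt_0_compat; lra]).
  destruct (hret eta heta) as [t0 [ht0 [ht0' [hXt0 hPt0]]]].
  assert (ht0T : T / 2 < t0) by (pose proof (Rmin_l (T / 2) (rho / (4 * M + 1))); unfold eta in ht0'; lra).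
  assert (ht0r : T - t0 < rho / (4 * M + 1)) by (pose proof (Rmin_r (T / 2) (rho / (4 * M + 1))); unfold eta in ht0'; lra).
  assert (hMr : 2 * M * (T - t0) <= rho / 2).
  { assert (2 * M * (T - t0) <= 2 * M * (rho / (4 * M + 1))) by (apply Rmult_le_compat_l; lra).
    assert (2 * M * (rho / (4 * M + 1)) <= rho / 2).
    { replace (2 * M * (rho / (4 * M + 1))) with (rho * (2 * M / (4 * M + 1))) by (field; lra).
      assert (2 * M / (4 * M + 1) <= / 2).
      { apply Rmult_le_reg_r with (4 * M + 1); [lra|]. unfold Rdiv. rewrite Rmult_assoc, Rinv_l by lra. lra. }
      nra. }
    lra. }
  set (g := fun s => Rabs (X s - X t0) + Rabs (P s - P t0)).
  assert (hinbox : forall u, Rabs (X u - X t0) <= rho -> Rabs (P u - P t0) <= rho ->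
     a - rho <= X u <= b + rho /\ c - rho <= P u <= d + rho).
  { intros u h1 h2. apply Rabs_le_box in h1. apply Rabs_le_box in h2. lra. }
  assert (hg : forall s, t0 <= s < T -> g s <= rho / 2).
  { apply (cont_ind g t0 T rho (rho / 2)); [lra|lra| | |].
    - intros s hs. unfold g. apply (continuity_pt_plus (fun u => Rabs (X u - X t0)) (fun u => Rabs (P u - P t0))).
      + apply cont_absdiff. apply (deriv_cont X s _ (proj1 (hder s ltac:(lra)))).
      + apply cont_absdiff. apply (deriv_cont P s _ (proj2 (hder s ltac:(lra)))).
    - unfold g. rewrite !Rminus_diag, Rabs_R0. lra.
    - intros s hs hall.
      assert (hbx : forall u, t0 <= u <= s -> a - rho <= X u <= b + rho /\ c - rho <= P u <= d + rho).
      { intros u hu. specialize (hall u hu). unfold g in hall. apply hinbox.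
        pose proof (Rabs_pos (X u - X t0)). pose proof (Rabs_pos (P u - P t0)). lra.
        pose proof (Rabs_pos (X u - X t0)). pose proof (Rabs_pos (P u - P t0)). lra. }
      pose proof (deriv_lip X (fun u => Hp (X u) (P u)) t0 s M) as h1.
      pose proof (deriv_lip P (fun u => - Hx (X u) (P u)) t0 s M) as h2.
      rewrite Rmin_left, Rmax_right in h1, h2 by lra.
      specialize (h1 ltac:(intros; apply hder; lra) ltac:(intros u hu; apply hMb; apply hbx; lra)).
      specialize (h2 ltac:(intros; apply hder; lra) ltac:(intros u hu; apply hMb; apply hbx; lra)).
      rewrite (Rabs_right (s - t0)) in h1, h2 by lra.
      unfold g. assert (M * (s - t0) <= M * (T - t0)) by (apply Rmult_le_compat_l; lra). lra. }
  assert (hbx : forall u, t0 <= u < T -> a - rho <= X u <= b + rho /\ c - rho <= P u <= d + rho).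
  { intros u hu. pose proof (hg u hu). unfold g in H0. apply hinbox.
    pose proof (Rabs_pos (X u - X t0)). pose proof (Rabs_pos (P u - P t0)). lra.
    pose proof (Rabs_pos (X u - X t0)). pose proof (Rabs_pos (P u - P t0)). lra. }
  assert (hmm : forall s s', t0 <= s < T -> t0 <= s' < T -> forall u, Rmin s' s <= u <= Rmax s' s -> t0 <= u < T).
  { intros s s' hs hs' u hu. unfold Rmin, Rmax in hu. destruct Rle_dec; lra. }
  destruct (lip_lim X t0 T M ltac:(lra) hM) as [xh hxh].
  { intros s s' hs hs'. apply (deriv_lip X (fun u => Hp (X u) (P u)) s' s M).
    - intros u hu. pose proof (hmm s s' hs hs' u hu). apply hder. lra.
    - intros u hu. pose proof (hmm s s' hs hs' u hu). apply hMb; apply hbx; auto. }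
  destruct (lip_lim P t0 T M ltac:(lra) hM) as [ph hph].
  { intros s s' hs hs'. apply (deriv_lip P (fun u => - Hx (X u) (P u)) s' s M).
    - intros u hu. pose proof (hmm s s' hs hs' u hu). apply hder. lra.
    - intros u hu. pose proof (hmm s s' hs hs' u hu). apply hMb; apply hbx; auto. }
  apply (ext_contra bnd eps H Hx Hp Hxx Hxp Hpx Hpp x p T X P xh ph he hC hT hmax hxh hph).
  - destruct bnd; simpl; auto.
    apply (lim_bounds X t0 T xh (-1) 1); auto; try lra.
    intros s hs. apply (hKd s). lra.
  - intros e _. now apply hb1.
  - intros e _. now apply hb2.
Qed.

Lemma Hp_mono (Hp Hpp : R -> R -> R) x q1 q2 :
  (forall q, derivable_pt_lim (fun z => Hp x z) q (Hpp x q)) -> (forall q, 0 < Hpp x q) ->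
  q1 < q2 -> Hp x q1 < Hp x q2.
Proof.
  intros hd hp hq. destruct (MVT_cor2 (fun z => Hp x z) (fun z => Hpp x z) q1 q2 hq) as [c [hc _]].
  { intros; apply hd. }
  pose proof (hp c). nra.
Qed.

Lemma deriv_pos_left (f : R -> R) z l : derivable_pt_lim f z l -> 0 < l ->
  exists h, h < 0 /\ f (z + h) < f z.
Proof.
  intros hd hl. destruct (hd l hl) as [del hdel].
  set (h := - del / 2). assert (hh : h < 0) by (unfold h; pose proof (cond_pos del); lra).
  exists h. split; auto. specialize (hdel h ltac:(lra) ltac:(rewrite Rabs_left by lra; unfold h; pose proof (cond_pos del); lra)).
  apply Rabs_def2 in hdel. assert (0 < (f (z + h) - f z) / h) by lra.
  assert (f (z + h) - f z = (f (z + h) - f z) / h * h) by (field; lra). nra.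
Qed.

Lemma deriv_neg_right (f : R -> R) z l : derivable_pt_lim f z l -> l < 0 ->
  exists h, 0 < h /\ f (z + h) < f z.
Proof.
  intros hd hl. destruct (hd (- l) ltac:(lra)) as [del hdel].
  set (h := del / 2). assert (hh : 0 < h) by (unfold h; pose proof (cond_pos del); lra).
  exists h. split; auto. specialize (hdel h ltac:(lra) ltac:(rewrite Rabs_right by lra; unfold h; pose proof (cond_pos del); lra)).
  apply Rabs_def2 in hdel. assert ((f (z + h) - f z) / h < 0) by lra.
  assert (f (z + h) - f z = (f (z + h) - f z) / h * h) by (field; lra). nra.
Qed.

Lemma argmin_deriv0 (H Hp : R -> R -> R) x q :
  derivable_pt_lim (fun z => H x z) q (Hp x q) -> is_argmin H x q -> Hp x q = 0.
Proof.
  intros hd ha. destruct (Rtotal_order (Hp x q) 0) as [h|[h|h]]; auto; exfalso.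
  - destruct (deriv_neg_right _ _ _ hd h) as [hh [_ hh']]. pose proof (ha (q + hh)). lra.
  - destruct (deriv_pos_left _ _ _ hd h) as [hh [_ hh']]. pose proof (ha (q + hh)). lra.
Qed.

Lemma argmin_ex (H Hp : R -> R -> R) x :
  (forall q, derivable_pt_lim (fun z => H x z) q (Hp x q)) -> H x 0 = 0 ->
  (exists A, forall p, A < Rabs p -> 1 < H x p / Rabs p) ->
  exists q, is_argmin H x q.
Proof.
  intros hd h0 [A hA].
  set (A' := Rmax A 0 + 1).
  assert (hA' : 0 < A') by (unfold A'; pose proof (Rmax_r A 0); lra).
  assert (hout : forall p, A' < Rabs p -> 0 < H x p).
  { intros p hp. assert (A < Rabs p) by (unfold A' in hp; pose proof (Rmax_l A 0); lra).
    specialize (hA p H0). assert (0 < Rabs p) by lra.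
    apply Rmult_lt_compat_r with (r := Rabs p) in hA; auto.
    unfold Rdiv in hA. rewrite Rmult_assoc, Rinv_l in hA by lra. lra. }
  destruct (continuity_ab_min (fun z => H x z) (- A') A' ltac:(lra)) as [q [hq1 hq2]].
  { intros c _. apply (deriv_cont _ _ _ (hd c)). }
  exists q. intros p. destruct (Rle_dec (Rabs p) A') as [hp|hp].
  - apply hq1. unfold Rabs in hp; destruct Rcase_abs in hp; lra.
  - pose proof (hq1 0 ltac:(lra)). pose proof (hout p ltac:(lra)). simpl in *. lra.
Qed.

Lemma convex_bound (H Hp Hpp : R -> R -> R) x p :
  (forall q, derivable_pt_lim (fun z => H x z) q (Hp x q)) ->
  (forall q, derivable_pt_lim (fun z => Hp x z) q (Hpp x q)) -> (forall q, 0 < Hpp x q) ->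
  H x 0 = 0 -> Hp x 0 * p <= H x p.
Proof.
  intros hd hd2 hpp h0. destruct (Rtotal_order p 0) as [h|[h|h]].
  - destruct (MVT_cor2 (fun z => H x z) (fun z => Hp x z) p 0 h) as [c [hc hc']].
    { intros; apply hd. }
    pose proof (Hp_mono Hp Hpp x c 0 hd2 hpp ltac:(lra)). nra.
  - subst. rewrite h0. lra.
  - destruct (MVT_cor2 (fun z => H x z) (fun z => Hp x z) 0 p h) as [c [hc hc']].
    { intros; apply hd. }
    pose proof (Hp_mono Hp Hpp x 0 c hd2 hpp ltac:(lra)). nra.
Qed.

Lemma Kint_Kdom bnd x : Kint bnd x -> Kdom bnd x.
Proof. destruct bnd; simpl; auto. lra. Qed.

Lemma coer_pt bnd H x : CondH3 bnd H -> Kint bnd x ->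
  exists A, forall p, A < Rabs p -> 1 < H x p / Rabs p.
Proof.
  intros [h3 _] hx.
  assert (hc : cpt_in_int bnd (fun c => x <= c <= x)).
  { split; [apply compact_P3|]. intros y hy. replace y with x by lra. auto. }
  destruct (h3 _ hc 1) as [A hA].
  exists A. intros p hp. apply hA; auto. lra.
Qed.

Lemma argmin_K bnd eps H Hx Hp Hxx Hxp Hpx Hpp x : 0 < eps ->
  C2_on (Udom bnd eps) H Hx Hp Hxx Hxp Hpx Hpp -> CondH0 bnd H -> CondH3 bnd H -> Kint bnd x ->
  exists q, is_argmin H x q.
Proof.
  intros he hC h0 h3 hx.
  assert (hU : Udom bnd eps x) by (apply Kdom_U; auto; apply Kint_Kdom; auto).
  apply (argmin_ex H Hp x).
  - intros q. apply (hC x q hU).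
  - apply h0. apply Kint_Kdom; auto.
  - apply (coer_pt bnd H x h3 hx).
Qed.

Lemma Hp_sign_argmin bnd eps H Hx Hp Hxx Hxp Hpx Hpp x q q' :
  C2_on (Udom bnd eps) H Hx Hp Hxx Hxp Hpx Hpp -> (forall x p, Kdom bnd x -> 0 < Hpp x p) ->
  0 < eps -> Kdom bnd x -> is_argmin H x q ->
  (q' < q -> Hp x q' < 0) /\ (q < q' -> 0 < Hp x q').
Proof.
  intros hC hpp he hx ha.
  assert (hU : Udom bnd eps x) by (apply Kdom_U; auto).
  assert (h0 : Hp x q = 0) by (apply (argmin_deriv0 H Hp x q); [apply (hC x q hU)|auto]).
  assert (hd2 : forall z, derivable_pt_lim (fun w => Hp x w) z (Hpp x z)) by (intros z; apply (hC x z hU)).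
  assert (hp2 : forall z, 0 < Hpp x z) by (intros; apply hpp; auto).
  split; intros hq.
  - pose proof (Hp_mono Hp Hpp x q' q hd2 hp2 hq). lra.
  - pose proof (Hp_mono Hp Hpp x q q' hd2 hp2 hq). lra.
Qed.

Lemma Hp_one_neg eps H Hx Hp Hxx Hxp Hpx Hpp :
  C2_on (Udom true eps) H Hx Hp Hxx Hxp Hpx Hpp -> (forall x p, Kdom true x -> 0 < Hpp x p) ->
  0 < eps -> CondH0 true H -> CondH3 true H -> CondH4 true H -> forall q, Hp 1 q < 0.
Proof.
  intros hC hpp he h0 h3 [_ h4].
  assert (hU1 : Udom true eps 1) by (simpl; lra).
  assert (hle : forall q, Hp 1 q <= 0).
  { intros q. destruct (Rle_dec (Hp 1 q) 0) as [|hn]; auto. exfalso.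
    destruct (h4 q) as [d [hd hd']].
    destruct (hC 1 q hU1) as (_&_&_&_&_&_&_&_&cHp&_).
    destruct (cHp (Hp 1 q) ltac:(lra)) as [del [hdel hdel']].
    set (y := 1 - Rmin (Rmin d del) 1 / 2).
    assert (hm : 0 < Rmin (Rmin d del) 1) by (repeat apply Rmin_pos; lra).
    pose proof (Rmin_l (Rmin d del) 1). pose proof (Rmin_r (Rmin d del) 1).
    pose proof (Rmin_l d del). pose proof (Rmin_r d del).
    assert (hy : 1 - d < y < 1) by (unfold y; lra).
    assert (hyK : Kint true y) by (simpl; unfold y; lra).
    destruct (argmin_K true eps H Hx Hp Hxx Hxp Hpx Hpp y he hC h0 h3 hyK) as [q' hq'].
    pose proof (hd' y hy q' hq').
    destruct (Hp_sign_argmin true eps H Hx Hp Hxx Hxp Hpx Hpp y q' q hC hpp he (Kint_Kdom _ _ hyK) hq') as [hs _].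
    specialize (hs H4).
    assert (Rabs (Hp y q - Hp 1 q) < Hp 1 q).
    { apply hdel'. simpl; unfold y; lra. rewrite Rabs_left; unfold y; lra. rewrite Rminus_diag, Rabs_R0; lra. }
    apply Rabs_def2 in H5. lra. }
  intros q. assert (hd2 : forall z, derivable_pt_lim (fun w => Hp 1 w) z (Hpp 1 z)) by (intros z; apply (hC 1 z hU1)).
  pose proof (Hp_mono Hp Hpp 1 q (q + 1) hd2 (fun z => hpp 1 z ltac:(simpl; lra)) ltac:(lra)).
  pose proof (hle (q + 1)). lra.
Qed.

Lemma Hp_mone_pos eps H Hx Hp Hxx Hxp Hpx Hpp :
  C2_on (Udom true eps) H Hx Hp Hxx Hxp Hpx Hpp -> (forall x p, Kdom true x -> 0 < Hpp x p) ->
  0 < eps -> CondH0 true H -> CondH3 true H -> CondH4 true H -> forall q, 0 < Hp (-1) q.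
Proof.
  intros hC hpp he h0 h3 [h4 _].
  assert (hU1 : Udom true eps (-1)) by (simpl; lra).
  assert (hle : forall q, 0 <= Hp (-1) q).
  { intros q. destruct (Rle_dec 0 (Hp (-1) q)) as [|hn]; auto. exfalso.
    destruct (h4 (- q)) as [d [hd hd']].
    destruct (hC (-1) q hU1) as (_&_&_&_&_&_&_&_&cHp&_).
    destruct (cHp (- Hp (-1) q) ltac:(lra)) as [del [hdel hdel']].
    set (y := -1 + Rmin (Rmin d del) 1 / 2).
    assert (hm : 0 < Rmin (Rmin d del) 1) by (repeat apply Rmin_pos; lra).
    pose proof (Rmin_l (Rmin d del) 1). pose proof (Rmin_r (Rmin d del) 1).
    pose proof (Rmin_l d del). pose proof (Rmin_r d del).
    assert (hy : -1 < y < -1 + d) by (unfold y; lra).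
    assert (hyK : Kint true y) by (simpl; unfold y; lra).
    destruct (argmin_K true eps H Hx Hp Hxx Hxp Hpx Hpp y he hC h0 h3 hyK) as [q' hq'].
    pose proof (hd' y hy q' hq').
    destruct (Hp_sign_argmin true eps H Hx Hp Hxx Hxp Hpx Hpp y q' q hC hpp he (Kint_Kdom _ _ hyK) hq') as [_ hs].
    specialize (hs ltac:(lra)).
    assert (Rabs (Hp y q - Hp (-1) q) < - Hp (-1) q).
    { apply hdel'. simpl; unfold y; lra. rewrite Rabs_right; unfold y; lra. rewrite Rminus_diag, Rabs_R0; lra. }
    apply Rabs_def2 in H5. lra. }
  intros q. assert (hd2 : forall z, derivable_pt_lim (fun w => Hp (-1) w) z (Hpp (-1) z)) by (intros z; apply (hC (-1) z hU1)).
  pose proof (Hp_mono Hp Hpp (-1) (q - 1) q hd2 (fun z => hpp (-1) z ltac:(simpl; lra)) ltac:(lra)).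
  pose proof (hle (q - 1)). lra.
Qed.

Lemma far_right eps H Hx Hp Hxx Hxp Hpx Hpp :
  C2_on (Udom false eps) H Hx Hp Hxx Hxp Hpx Hpp -> (forall x p, Kdom false x -> 0 < Hpp x p) ->
  0 < eps -> CondH0 false H -> CondH3 false H -> CondH4 false H ->
  forall M, exists A, forall y q, A < y -> q <= M -> Hp y q < 0.
Proof.
  intros hC hpp he h0 h3 [_ h4] M. destruct (h4 M) as [A hA]. exists A.
  intros y q hy hq.
  destruct (argmin_K false eps H Hx Hp Hxx Hxp Hpx Hpp y he hC h0 h3 I) as [q' hq'].
  pose proof (hA y hy q' hq').
  destruct (Hp_sign_argmin false eps H Hx Hp Hxx Hxp Hpx Hpp y q' q hC hpp he I hq') as [hs _].
  apply hs. lra.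
Qed.

Lemma far_left eps H Hx Hp Hxx Hxp Hpx Hpp :
  C2_on (Udom false eps) H Hx Hp Hxx Hxp Hpx Hpp -> (forall x p, Kdom false x -> 0 < Hpp x p) ->
  0 < eps -> CondH0 false H -> CondH3 false H -> CondH4 false H ->
  forall M, exists A, forall y q, y < A -> - M <= q -> 0 < Hp y q.
Proof.
  intros hC hpp he h0 h3 [h4 _] M. destruct (h4 M) as [A hA]. exists A.
  intros y q hy hq.
  destruct (argmin_K false eps H Hx Hp Hxx Hxp Hpx Hpp y he hC h0 h3 I) as [q' hq'].
  pose proof (hA y hy q' hq').
  destruct (Hp_sign_argmin false eps H Hx Hp Hxx Hxp Hpx Hpp y q' q hC hpp he I hq') as [_ hs].
  apply hs. lra.
Qed.

Lemma chain2 U (H Hx Hp : R -> R -> R) (f g : R -> R) t fx gx :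
  (exists rho, 0 < rho /\ forall y, Rabs (y - f t) < rho -> U y) ->
  (forall y q, U y -> derivable_pt_lim (fun z => H z q) y (Hx y q)) ->
  derivable_pt_lim (fun z => H (f t) z) (g t) (Hp (f t) (g t)) ->
  cont2_at U Hx (f t) (g t) ->
  derivable_pt_lim f t fx -> derivable_pt_lim g t gx ->
  derivable_pt_lim (fun s => H (f s) (g s)) t (Hx (f t) (g t) * fx + Hp (f t) (g t) * gx).
Proof.
  intros [rho [hrho hrho']] hdx hdp hc hf hg e he.
  set (x := f t). set (p := g t). fold x p in hrho', hdp, hc.
  pose proof (derivable_pt_lim_comp g (fun z => H x z) t gx (Hp x p) hg hdp) as hB.
  destruct (hB (e / 3) ltac:(lra)) as [dB hdB].
  set (K := Rabs fx + 1). assert (hK : 0 < K) by (unfold K; pose proof (Rabs_pos fx); lra).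
  set (eps := e / (3 * K)). assert (heps : 0 < eps) by (unfold eps; apply Rdiv_lt_0_compat; lra).
  destruct (hc eps heps) as [dc [hdc hdc']].
  destruct (cont_eps f t (Rmin dc rho) (deriv_cont f t fx hf) ltac:(apply Rmin_pos; auto)) as [df [hdf hdf']].
  destruct (cont_eps g t dc (deriv_cont g t gx hg) hdc) as [dg [hdg hdg']].
  set (Hxa := Rabs (Hx x p) + 1). assert (hHxa : 0 < Hxa) by (unfold Hxa; pose proof (Rabs_pos (Hx x p)); lra).
  destruct (hf (Rmin 1 (e / (3 * Hxa))) ltac:(apply Rmin_pos; [lra|apply Rdiv_lt_0_compat; lra])) as [d1 hd1].
  assert (hdel : 0 < Rmin (Rmin dB df) (Rmin dg d1)).
  { repeat apply Rmin_pos; auto; apply cond_pos. }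
  exists (mkposreal _ hdel). intros h hh0 hh. simpl in hh.
  pose proof (Rmin_l (Rmin dB df) (Rmin dg d1)). pose proof (Rmin_r (Rmin dB df) (Rmin dg d1)).
  pose proof (Rmin_l dB df). pose proof (Rmin_r dB df). pose proof (Rmin_l dg d1). pose proof (Rmin_r dg d1).
  set (a := f (t + h)). set (q := g (t + h)).
  assert (ha : Rabs (a - x) < Rmin dc rho) by (apply hdf'; replace (t + h - t) with h by ring; lra).
  pose proof (Rmin_l dc rho). pose proof (Rmin_r dc rho).
  assert (hq : Rabs (q - p) < dc) by (apply hdg'; replace (t + h - t) with h by ring; lra).
  assert (hbetw : forall z, Rmin x a <= z <= Rmax x a -> Rabs (z - x) <= Rabs (a - x)).
  { intros z hz. unfold Rmin, Rmax in hz. destruct Rle_dec; unfold Rabs; repeat destruct Rcase_abs; lra. }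
  pose proof (mvt_bound (fun z => H z q) (fun z => Hx z q) x a (Hx x p) eps) as hm.
  specialize (hm ltac:(intros z hz; apply hdx; apply hrho'; pose proof (hbetw z hz); lra)).
  specialize (hm ltac:(intros z hz; left; apply hdc'; [apply hrho'; pose proof (hbetw z hz); lra|pose proof (hbetw z hz); lra|lra])).
  simpl in hm.
  specialize (hd1 h hh0 ltac:(lra)). fold x a in hd1.
  pose proof (Rmin_l 1 (e / (3 * Hxa))). pose proof (Rmin_r 1 (e / (3 * Hxa))).
  specialize (hdB h hh0 ltac:(lra)). unfold comp in hdB. fold q x p in hdB.
  assert (hah : Rabs (a - x) <= K * Rabs h).
  { assert (hr : Rabs ((a - x) / h) < K).
    { unfold K. pose proof (Rabs_triang_inv ((a - x) / h) fx). lra. }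
    unfold Rdiv in hr. rewrite Rabs_mult, Rabs_inv in hr.
    assert (hr0 : 0 < Rabs h) by (apply Rabs_pos_lt; auto).
    apply Rmult_lt_compat_r with (r := Rabs h) in hr; auto.
    rewrite Rmult_assoc, Rinv_l in hr by lra. lra. }
  assert (hh' : 0 < Rabs h) by (apply Rabs_pos_lt; auto).
  replace ((H a q - H x p) / h - (Hx x p * fx + Hp x p * gx))
    with ((H a q - H x q - Hx x p * (a - x)) / h + Hx x p * ((a - x) / h - fx) + ((H x q - H x p) / h - Hp x p * gx))
    by (field; auto).
  eapply Rle_lt_trans; [apply Rabs_triang|].
  eapply Rle_lt_trans; [apply Rplus_le_compat_r, Rabs_triang|].
  assert (h1 : Rabs ((H a q - H x q - Hx x p * (a - x)) / h) <= e / 3).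
  { unfold Rdiv. rewrite Rabs_mult, Rabs_inv.
    apply Rmult_le_reg_r with (Rabs h); auto. rewrite Rmult_assoc, Rinv_l by lra.
    eapply Rle_trans; [rewrite Rmult_1_r; apply hm|].
    apply Rle_trans with (eps * (K * Rabs h)); [apply Rmult_le_compat_l; lra|].
    unfold eps. right. field. lra. }
  assert (h2 : Rabs (Hx x p * ((a - x) / h - fx)) <= e / 3).
  { rewrite Rabs_mult.
    apply Rle_trans with (Hxa * (e / (3 * Hxa))).
    - apply Rmult_le_compat; [apply Rabs_pos|apply Rabs_pos|unfold Hxa; lra|lra].
    - right. field. lra. }
  lra.
Qed.

Lemma energy bnd eps H Hx Hp Hxx Hxp Hpx Hpp x p T X P t1 :
  0 < eps -> C2_on (Udom bnd eps) H Hx Hp Hxx Hxp Hpx Hpp ->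
  ham_sol bnd Hx Hp x p T X P -> 0 < t1 < T ->
  forall s, t1 <= s < T -> H (X s) (P s) = H (X t1) (P t1).
Proof.
  intros he hC (hX0 & hP0 & hKd & hder & hrc) ht1 s hs.
  assert (hd : forall u, 0 < u < T -> derivable_pt_lim (fun s => H (X s) (P s)) u 0).
  { intros u hu. destruct (hder u hu) as [dX dP].
    assert (hU : Udom bnd eps (X u)) by (apply Kdom_U; auto; apply hKd; lra).
    replace 0 with (Hx (X u) (P u) * Hp (X u) (P u) + Hp (X u) (P u) * (- Hx (X u) (P u))) by ring.
    apply (chain2 (Udom bnd eps) H Hx Hp X P u); auto.
    - apply Udom_open; auto.
    - intros y q hy. apply (hC y q hy).
    - apply (hC (X u) (P u) hU).
    - apply (hC (X u) (P u) hU). }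
  pose proof (deriv_lip (fun s => H (X s) (P s)) (fun _ => 0) t1 s 0) as hl.
  rewrite Rmin_left, Rmax_right in hl by lra.
  specialize (hl ltac:(intros; apply hd; lra) ltac:(intros; rewrite Rabs_R0; lra)).
  rewrite Rmult_0_l in hl. pose proof (Rabs_pos (H (X s) (P s) - H (X t1) (P t1))).
  assert (Rabs (H (X s) (P s) - H (X t1) (P t1)) = 0) by lra. unfold Rabs in H1; destruct Rcase_abs in H1; lra.
Qed.

Lemma gron_deriv (P : R -> R) q L tau u dP :
  derivable_pt_lim P u dP ->
  derivable_pt_lim (fun v => (q - P v) * exp (- L * (v - tau))) u
    (exp (- L * (u - tau)) * (- dP - L * (q - P u))).
Proof.
  intros hP.
  assert (hE : derivable_pt_lim (fun v => exp (- L * (v - tau))) u (exp (- L * (u - tau)) * (- L))).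
  { apply (deriv_ext _ (comp exp (fun v => - L * (v - tau)))); [reflexivity|].
    apply derivable_pt_lim_comp; [|apply derivable_pt_lim_exp].
    intros e he. exists (mkposreal 1 Rlt_0_1). intros h hh _.
    replace ((- L * (u + h - tau) - - L * (u - tau)) / h - - L) with 0 by (field; auto).
    rewrite Rabs_R0. lra. }
  assert (hQ : derivable_pt_lim (fun v => q - P v) u (0 - dP)).
  { apply (deriv_ext _ (minus_fct (fct_cte q) P)); [reflexivity|].
    apply derivable_pt_lim_minus; [apply derivable_pt_lim_const|auto]. }
  replace (exp (- L * (u - tau)) * (- dP - L * (q - P u))) with
    ((0 - dP) * exp (- L * (u - tau)) + (q - P u) * (exp (- L * (u - tau)) * (- L))) by ring.
  apply (deriv_ext _ (mult_fct (fun v => q - P v) (fun v => exp (- L * (v - tau))))); [reflexivity|].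
  apply (derivable_pt_lim_mult (fun v => q - P v) (fun v => exp (- L * (v - tau)))); auto.
Qed.

Lemma barrier (g : R -> R -> R) (Y P : R -> R) q t2 s1 L :
  t2 < s1 -> 0 <= L ->
  (forall u, t2 <= u <= s1 -> derivable_pt_lim P u (g (Y u) (P u))) ->
  (forall u, t2 <= u <= s1 -> 0 <= g (Y u) q) ->
  (forall u, t2 <= u <= s1 -> P u <= q -> Rabs (g (Y u) (P u) - g (Y u) q) <= L * (q - P u)) ->
  q <= P t2 -> q <= P s1.
Proof.
  intros hts hL hd hg hlip h2.
  destruct (Rle_dec q (P s1)) as [|hn]; auto. exfalso.
  assert (hc : forall u, t2 <= u <= s1 -> continuity_pt P u) by (intros u hu; apply (deriv_cont _ _ _ (hd u hu))).
  set (S := fun u => t2 <= u <= s1 /\ q <= P u).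
  assert (hS0 : S t2) by (split; [lra|auto]).
  assert (hbd : bound S) by (exists s1; intros u [hu _]; lra).
  destruct (completeness S hbd (ex_intro _ t2 hS0)) as [tau [hub hlub]].
  assert (ht1 : t2 <= tau) by (apply hub; auto).
  assert (ht2 : tau <= s1) by (apply hlub; intros u [hu _]; lra).
  assert (hPtau : q <= P tau).
  { destruct (Rle_dec q (P tau)) as [|hn']; auto. exfalso.
    destruct (Req_dec tau t2) as [->|hne]; [lra|].
    destruct (cont_eps P tau (q - P tau) (hc tau ltac:(lra)) ltac:(lra)) as [a [ha ha']].
    assert (~ is_upper_bound S (tau - Rmin a (tau - t2) / 2)).
    { intros hu. pose proof (hlub _ hu). assert (0 < Rmin a (tau - t2)) by (apply Rmin_pos; lra). lra. }
    apply H. intros u [hu1 hu2]. destruct (Rle_dec u (tau - Rmin a (tau - t2) / 2)) as [|hu3]; auto. exfalso.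
    assert (u <= tau) by (apply hub; split; auto).
    pose proof (Rmin_l a (tau - t2)).
    assert (Rabs (u - tau) < a) by (rewrite Rabs_left1 by lra; lra).
    pose proof (ha' u H2). apply Rabs_def2 in H3. lra. }
  assert (htau : tau < s1) by (destruct (Req_dec tau s1) as [->|]; lra).
  assert (hafter : forall u, tau < u <= s1 -> P u < q).
  { intros u hu. destruct (Rlt_dec (P u) q) as [|hn']; auto. exfalso.
    assert (u <= tau) by (apply hub; split; [lra|lra]). lra. }
  assert (hPtau' : P tau <= q).
  { destruct (Rle_dec (P tau) q) as [|hn']; auto. exfalso.
    destruct (cont_eps P tau (P tau - q) (hc tau ltac:(lra)) ltac:(lra)) as [a [ha ha']].
    set (u := tau + Rmin a (s1 - tau) / 2).
    assert (0 < Rmin a (s1 - tau)) by (apply Rmin_pos; lra).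
    pose proof (Rmin_l a (s1 - tau)). pose proof (Rmin_r a (s1 - tau)).
    pose proof (hafter u ltac:(unfold u; lra)).
    assert (Rabs (u - tau) < a) by (rewrite Rabs_right; unfold u; lra).
    pose proof (ha' u H3). apply Rabs_def2 in H4. lra. }
  set (phi := fun v => (q - P v) * exp (- L * (v - tau))).
  destruct (MVT_cor2 phi (fun v => exp (- L * (v - tau)) * (- g (Y v) (P v) - L * (q - P v))) tau s1 htau)
    as [c [hc1 hc2]].
  { intros v hv. apply gron_deriv. apply hd. lra. }
  assert (hneg : - g (Y c) (P c) - L * (q - P c) <= 0).
  { assert (hPc : P c <= q) by (pose proof (hafter c ltac:(lra)); lra).
    pose proof (hlip c ltac:(lra) hPc). pose proof (hg c ltac:(lra)).
    apply Rabs_le_box in H. lra. }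
  pose proof (exp_pos (- L * (c - tau))).
  assert (hprod : exp (- L * (c - tau)) * (- g (Y c) (P c) - L * (q - P c)) <= 0) by nra.
  assert (hph : phi s1 - phi tau <= 0) by (rewrite hc1; nra).
  unfold phi in hph. replace (tau - tau) with 0 in hph by ring. rewrite Rmult_0_r, exp_0 in hph.
  pose proof (exp_pos (- L * (s1 - tau))). nra.
Qed.

Lemma ctn_bounds (f : R -> R) a b : a <= b -> (forall c, a <= c <= b -> continuity_pt f c) ->
  exists m M, forall c, a <= c <= b -> m <= f c <= M.
Proof.
  intros hab hc. destruct (continuity_ab_maj f a b hab hc) as [x1 [h1 _]].
  destruct (continuity_ab_min f a b hab hc) as [x2 [h2 _]].
  exists (f x2), (f x1). intros c hcc. split; [apply h2|apply h1]; auto.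
Qed.

Lemma up_gen (X P : R -> R) (F G Gp : R -> R -> R) T (yq qq : nat -> R) :
  0 < T ->
  (forall s, 0 < s < T -> derivable_pt_lim X s (F (X s) (P s)) /\ derivable_pt_lim P s (G (X s) (P s))) ->
  (forall y q, derivable_pt_lim (fun z => G y z) q (Gp y q)) ->
  (forall y q, cont2_at (fun _ => True) Gp y q) ->
  cv_infty qq ->
  (forall n y, yq n <= y -> 0 <= G y (qq n)) ->
  (forall M, exists A, forall y q, A < y -> q <= M -> F y q < 0) ->
  to_pinf_left X T -> to_pinf_left P T.
Proof.
  intros hT hder hGd hGc hqq hG5 hfar hX M.
  destruct (hqq M) as [N hN]. specialize (hN N (le_n _)). set (q := qq N) in *.
  destruct (hfar q) as [A1 hA1].
  destruct (hX (Rmax A1 (yq N))) as [d1 [hd1 hd1']].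
  set (t1 := Rmax (T / 2) (T - d1 / 2)).
  assert (ht1 : T / 2 <= t1 < T /\ T - d1 < t1) by (unfold t1, Rmax; destruct Rle_dec; lra).
  assert (hXb : forall t, t1 <= t < T -> A1 < X t /\ yq N <= X t).
  { intros t ht. pose proof (hd1' t ltac:(lra) ltac:(lra)).
    pose proof (Rmax_l A1 (yq N)). pose proof (Rmax_r A1 (yq N)). lra. }
  assert (ht2 : exists t2, t1 <= t2 < T /\ q <= P t2).
  { destruct (classic (exists t2, t1 <= t2 < T /\ q <= P t2)) as [|hn]; auto. exfalso.
    assert (hlow : forall t, t1 <= t < T -> P t < q).
    { intros t ht. destruct (Rlt_dec (P t) q) as [|hn']; auto. exfalso. apply hn. exists t. split; auto. lra. }
    assert (hdec : forall t, t1 < t < T -> X t < X t1).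
    { intros t ht. destruct (MVT_cor2 X (fun s => F (X s) (P s)) t1 t ltac:(lra)) as [c [hc1 hc2]].
      { intros c hc. apply hder. lra. }
      assert (F (X c) (P c) < 0).
      { apply hA1. apply hXb; lra. pose proof (hlow c ltac:(lra)). lra. }
      nra. }
    destruct (hX (X t1)) as [d2 [hd2 hd2']].
    set (t := Rmax ((t1 + T) / 2) (T - d2 / 2)).
    assert (ht : (t1 + T) / 2 <= t < T /\ T - d2 < t) by (unfold t, Rmax; destruct Rle_dec; lra).
    pose proof (hd2' t ltac:(lra) ltac:(lra)). pose proof (hdec t ltac:(lra)). lra. }
  destruct ht2 as [t2 [ht2 hPt2]].
  assert (hall : forall s, t2 <= s < T -> q <= P s).
  { intros s hs. destruct (Req_dec s t2) as [->|hne]; auto.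
    assert (hcX : forall c, t2 <= c <= s -> continuity_pt X c) by (intros c hc; apply (deriv_cont _ _ _ (proj1 (hder c ltac:(lra))))).
    assert (hcP : forall c, t2 <= c <= s -> continuity_pt P c) by (intros c hc; apply (deriv_cont _ _ _ (proj2 (hder c ltac:(lra))))).
    destruct (ctn_bounds X t2 s ltac:(lra) hcX) as [xm [xM hxb]].
    destruct (ctn_bounds P t2 s ltac:(lra) hcP) as [pm [pM hpb]].
    destruct (bound2 (fun _ => True) Gp xm xM (Rmin pm q) (Rmax pM q)) as [L0 hL0]; auto.
    set (L := Rmax L0 0).
    apply (barrier G X P q t2 s L); auto.
    - lra.
    - apply Rmax_r.
    - intros u hu. apply hder. lra.
    - intros u hu. apply hG5. apply hXb. lra.
    - intros u hu hPu. rewrite <- (Rabs_right (q - P u)) by lra.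
      replace (q - P u) with (- (P u - q)) by ring. rewrite Rabs_Ropp.
      apply (deriv_lip (fun z => G (X u) z) (fun z => Gp (X u) z) q (P u) L).
      + intros; apply hGd.
      + intros z hz. pose proof (hxb u hu). pose proof (hpb u hu).
        eapply Rle_trans; [apply hL0|apply Rmax_l].
        * lra.
        * rewrite Rmin_right, Rmax_left in hz by lra.
          pose proof (Rmin_l pm q). pose proof (Rmin_r pm q). pose proof (Rmax_l pM q). pose proof (Rmax_r pM q). lra. }
  exists (T - t2). split; [lra|]. intros t ht ht'. pose proof (hall t ltac:(lra)). lra.
Qed.

Definition Ev (T : R) (Q : R -> Prop) := exists d, 0 < d /\ forall t, 0 <= t < T -> T - d < t -> Q t.

Lemma sign_split (f : R -> R) T : 0 < T -> (forall s, 0 < s < T -> continuity_pt f s) ->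
  (forall A, Ev T (fun t => A < Rabs (f t))) -> to_pinf_left f T \/ to_minf_left f T.
Proof.
  intros hT hc hA.
  destruct (hA 0) as [d0 [hd0 hd0']].
  set (t1 := Rmax (T / 2) (T - d0 / 2)).
  assert (ht1 : T / 2 <= t1 < T /\ T - d0 < t1) by (unfold t1, Rmax; destruct Rle_dec; lra).
  assert (hnz : forall t, t1 <= t < T -> f t <> 0).
  { intros t ht he. pose proof (hd0' t ltac:(lra) ltac:(lra)). rewrite he, Rabs_R0 in H. lra. }
  destruct (Rtotal_order (f t1) 0) as [hneg|[hz|hpos]].
  - right. assert (hall : forall t, t1 <= t < T -> f t < 0).
    { intros t ht. destruct (Rlt_dec (f t) 0) as [|hn]; auto. exfalso.
      assert (f t > 0) by (pose proof (hnz t ht); lra).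
      assert (t1 < t) by (destruct (Req_dec t t1) as [->|]; lra).
      destruct (Ranalysis5.IVT_interv f t1 t) as [z [hz1 hz2]]; auto.
      { intros a ha. apply hc. lra. }
      apply (hnz z); auto. lra. }
    intros M. destruct (hA M) as [d [hd hd']]. exists (Rmin d (T - t1)).
    split; [apply Rmin_pos; lra|]. intros t ht ht'.
    pose proof (Rmin_l d (T - t1)). pose proof (Rmin_r d (T - t1)).
    pose proof (hd' t ht ltac:(lra)) as hh. pose proof (hall t ltac:(lra)) as hh2.
    rewrite Rabs_left in hh by lra. lra.
  - exfalso. apply (hnz t1); auto. lra.
  - left. assert (hall : forall t, t1 <= t < T -> 0 < f t).
    { intros t ht. destruct (Rlt_dec 0 (f t)) as [|hn]; auto. exfalso.
      assert (f t < 0) by (pose proof (hnz t ht); lra).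
      assert (t1 < t) by (destruct (Req_dec t t1) as [->|]; lra).
      destruct (Ranalysis5.IVT_interv (fun s => - f s) t1 t) as [z [hz1 hz2]]; auto.
      { intros a ha. apply continuity_pt_opp. apply hc. lra. }
      { lra. } { lra. }
      apply (hnz z); auto. lra. lra. }
    intros M. destruct (hA M) as [d [hd hd']]. exists (Rmin d (T - t1)).
    split; [apply Rmin_pos; lra|]. intros t ht ht'.
    pose proof (Rmin_l d (T - t1)). pose proof (Rmin_r d (T - t1)).
    pose proof (hd' t ht ltac:(lra)) as hh. pose proof (hall t ltac:(lra)) as hh2.
    rewrite Rabs_right in hh by lra. lra.
Qed.

Lemma div_gt a b : 0 < a -> 1 < b / a -> a < b.
Proof.
  intros ha h. apply Rmult_lt_compat_r with (r := a) in h; auto.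
  unfold Rdiv in h. rewrite Rmult_assoc, Rinv_l, Rmult_1_r, Rmult_1_l in h by lra. auto.
Qed.

Lemma cont2_opp U (g : R -> R -> R) x p : cont2_at U g x p -> cont2_at U (fun y q => - g y q) x p.
Proof.
  intros h e he. destruct (h e he) as [d [hd hd']]. exists d. split; auto.
  intros y q hy h1 h2. replace (- g y q - - g x p) with (- (g y q - g x p)) by ring.
  rewrite Rabs_Ropp. auto.
Qed.

Lemma cont2_neg (g : R -> R -> R) x p : cont2_at (fun _ => True) g (- x) (- p) ->
  cont2_at (fun _ => True) (fun y q => - g (- y) (- q)) x p.
Proof.
  intros h e he. destruct (h e he) as [d [hd hd']]. exists d. split; auto.
  intros y q hy h1 h2. replace (- g (- y) (- q) - - g (- x) (- p)) with (- (g (- y) (- q) - g (- x) (- p))) by ring.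
  rewrite Rabs_Ropp. apply hd'; auto.
  replace (- y - - x) with (- (y - x)) by ring. rewrite Rabs_Ropp. auto.
  replace (- q - - p) with (- (q - p)) by ring. rewrite Rabs_Ropp. auto.
Qed.

Lemma vacuous bnd X P T : T <= 0 -> to_lo_left bnd X T /\ to_minf_left P T.
Proof.
  intros hT. split.
  - destruct bnd; simpl.
    + intros e he. exists 1. split; [lra|]. intros t ht. lra.
    + intros M. exists 1. split; [lra|]. intros t ht. lra.
  - intros M. exists 1. split; [lra|]. intros t ht. lra.
Qed.

Theorem mainTheorem10 (bnd : bool) (H Hx Hp : R -> R -> R)
  (hH : CondH bnd H Hx Hp)
  (x p T : R) (X P : R -> R)
  (hx : Kdom bnd x)
  (hmax : ham_maximal bnd Hx Hp x p T X P) :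
  (to_lo_left bnd X T /\ to_minf_left P T) \/
  (to_hi_left bnd X T /\ to_pinf_left P T).
Proof.
  destruct (Rle_dec T 0) as [hT0|hT0]; [left; apply vacuous; auto|].
  assert (hT : 0 < T) by lra.
  destruct hH as (h0 & h1 & h2 & h3 & h4 & h5).
  destruct h1 as (eps & Hxx & Hxp & Hpx & Hpp & he & hC & hpp).
  pose proof hmax as [hsol _]. pose proof hsol as (hX0 & hP0 & hKd & hder & hrc).
  set (t1 := T / 2).
  set (E := H (X t1) (P t1)).
  assert (hE : forall s, t1 <= s < T -> H (X s) (P s) = E).
  { intros s hs. apply (energy bnd eps H Hx Hp Hxx Hxp Hpx Hpp x p T X P t1 he hC hsol); auto.
    unfold t1; lra. }
  assert (hcX : forall s, 0 < s < T -> continuity_pt X s) by (intros s hs; apply (deriv_cont _ _ _ (proj1 (hder s hs)))).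
  assert (hcP : forall s, 0 < s < T -> continuity_pt P s) by (intros s hs; apply (deriv_cont _ _ _ (proj2 (hder s hs)))).
  assert (hNR : forall a b c d, Kdom bnd a -> Kdom bnd b -> Ev T (fun t => ~ (a <= X t <= b /\ c <= P t <= d))).
  { intros a b c d ha hb. apply NNPP; intro hn.
    apply (no_return bnd eps H Hx Hp Hxx Hxp Hpx Hpp x p T X P a b c d he hC hT hmax ha hb).
    - intros hbt. subst bnd. apply (Hp_one_neg eps H Hx Hp Hxx Hxp Hpx Hpp); auto.
    - intros hbt. subst bnd. apply (Hp_mone_pos eps H Hx Hp Hxx Hxp Hpx Hpp); auto.
    - intros eta heta. apply NNPP; intro hn2. apply hn. exists eta. split; auto.
      intros t ht ht' hin. apply hn2. exists t. tauto. }
  assert (hKs : forall lo hi, Kint bnd lo -> Kint bnd hi -> cpt_in_int bnd (fun c => lo <= c <= hi)).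
  { intros lo hi hlo hhi. split; [apply compact_P3|]. intros c hc.
    destruct bnd; simpl in *; auto. lra. }
  assert (hconv : forall x0 p0, Kdom bnd x0 -> Hp x0 0 * p0 <= H x0 p0).
  { intros x0 p0 hx0. assert (hU : Udom bnd eps x0) by (apply Kdom_U; auto).
    apply (convex_bound H Hp Hpp x0 p0).
    - intros q; apply (hC x0 q hU).
    - intros q; apply (hC x0 q hU).
    - intros q; apply hpp; auto.
    - apply h0; auto. }
  destruct bnd.
  - assert (hPbig : forall A, Ev T (fun t => A < Rabs (P t))).
    { intros A. destruct (hNR (-1) 1 (- Rabs A) (Rabs A) ltac:(simpl; lra) ltac:(simpl; lra)) as [d [hd hd']].
      exists d. split; auto. intros t ht ht'. specialize (hd' t ht ht').
      pose proof (hKd t ht) as hk. simpl in hk.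
      destruct (Rlt_dec A (Rabs (P t))) as [|hn]; auto. exfalso. apply hd'. split; auto.
      pose proof (Rle_abs A). unfold Rabs in *. destruct Rcase_abs; destruct Rcase_abs in hn; lra. }
    assert (hUm1 : Udom true eps (-1)) by (simpl; lra).
    assert (hU1 : Udom true eps 1) by (simpl; lra).
    assert (hE0 : 0 <= Rabs E) by apply Rabs_pos.
    destruct (sign_split P T hT hcP hPbig) as [hPp|hPm].
    + right. split; [|exact hPp]. simpl.
      intros e0 he0.
      set (c0 := Hp (-1) 0).
      assert (hc0 : 0 < c0) by (apply (Hp_mone_pos eps H Hx Hp Hxx Hxp Hpx Hpp); auto).
      destruct (hC (-1) 0 hUm1) as (_&_&_&_&_&_&_&_&cHp&_).
      destruct (cHp (c0 / 2) ltac:(lra)) as [del [hdel hdel']].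
      set (d' := Rmin del 1 / 2).
      assert (hd' : 0 < d' /\ d' < del /\ d' < 1) by (unfold d'; pose proof (Rmin_l del 1); pose proof (Rmin_r del 1); assert (0 < Rmin del 1) by (apply Rmin_pos; lra); lra).
      assert (hlow : forall y, -1 <= y <= -1 + d' -> c0 / 2 < Hp y 0).
      { intros y hy. assert (Rabs (Hp y 0 - Hp (-1) 0) < c0 / 2).
        { apply hdel'. simpl; lra. rewrite Rabs_right; lra. rewrite Rminus_diag, Rabs_R0; lra. }
        apply Rabs_def2 in H0. unfold c0 in *. lra. }
      set (e' := Rmin e0 1 / 2).
      assert (he' : 0 < e' /\ e' < e0 /\ e' < 1) by (unfold e'; pose proof (Rmin_l e0 1); pose proof (Rmin_r e0 1); assert (0 < Rmin e0 1) by (apply Rmin_pos; lra); lra).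
      destruct (proj1 h3 _ (hKs (-1 + d') (1 - e') ltac:(simpl; lra) ltac:(simpl; lra)) 1) as [A hA].
      set (B := Rmax (Rmax A (2 * Rabs E / c0)) (Rabs E)).
      assert (hB : A <= B /\ 2 * Rabs E / c0 <= B /\ Rabs E <= B).
      { unfold B. pose proof (Rmax_l (Rmax A (2 * Rabs E / c0)) (Rabs E)).
        pose proof (Rmax_r (Rmax A (2 * Rabs E / c0)) (Rabs E)).
        pose proof (Rmax_l A (2 * Rabs E / c0)). pose proof (Rmax_r A (2 * Rabs E / c0)). lra. }
      destruct (hPp B) as [d1 [hd1 hd1']].
      exists (Rmin d1 (T - t1)). split; [apply Rmin_pos; unfold t1; lra|].
      intros t ht ht'. pose proof (Rmin_l d1 (T - t1)). pose proof (Rmin_r d1 (T - t1)).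
      pose proof (hd1' t ht ltac:(lra)) as hPt.
      pose proof (hE t ltac:(lra)) as hEt.
      pose proof (hKd t ht) as hk. simpl in hk.
      assert (hPpos : 0 < P t) by (pose proof (Rabs_pos E); lra).
      destruct (Rle_dec (X t) (-1 + d')) as [hl|hl].
      * exfalso. pose proof (hconv (X t) (P t) hk). pose proof (hlow (X t) ltac:(lra)).
        assert (c0 / 2 * P t < Hp (X t) 0 * P t) by (apply Rmult_lt_compat_r; lra).
        assert (hq : 2 * Rabs E / c0 < P t) by lra.
        assert (Rabs E < c0 / 2 * P t).
        { apply Rmult_lt_compat_l with (r := c0 / 2) in hq; [|lra].
          replace (c0 / 2 * (2 * Rabs E / c0)) with (Rabs E) in hq by (field; lra). lra. }
        pose proof (Rle_abs E). lra.
      * destruct (Rle_dec (X t) (1 - e')) as [hl2|hl2].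
        -- exfalso. assert (hAP : A < Rabs (P t)) by (rewrite Rabs_right; lra).
           pose proof (div_gt _ _ (Rabs_pos_lt (P t) ltac:(lra)) (hA (P t) (X t) hAP ltac:(lra))) as hg.
           rewrite Rabs_right in hg by lra. pose proof (Rle_abs E). lra.
        -- rewrite Rabs_left1 by lra. lra.
    + left. split; [|exact hPm]. simpl.
      intros e0 he0.
      set (c0 := - Hp 1 0).
      assert (hc0 : 0 < c0) by (unfold c0; pose proof (Hp_one_neg eps H Hx Hp Hxx Hxp Hpx Hpp hC hpp he h0 h3 h4 0); lra).
      destruct (hC 1 0 hU1) as (_&_&_&_&_&_&_&_&cHp&_).
      destruct (cHp (c0 / 2) ltac:(lra)) as [del [hdel hdel']].
      set (d' := Rmin del 1 / 2).
      assert (hd' : 0 < d' /\ d' < del /\ d' < 1) by (unfold d'; pose proof (Rmin_l del 1); pose proof (Rmin_r del 1); assert (0 < Rmin del 1) by (apply Rmin_pos; lra); lra).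
      assert (hlow : forall y, 1 - d' <= y <= 1 -> Hp y 0 < - (c0 / 2)).
      { intros y hy. assert (Rabs (Hp y 0 - Hp 1 0) < c0 / 2).
        { apply hdel'. simpl; lra. rewrite Rabs_left1; lra. rewrite Rminus_diag, Rabs_R0; lra. }
        apply Rabs_def2 in H0. unfold c0 in *. lra. }
      set (e' := Rmin e0 1 / 2).
      assert (he' : 0 < e' /\ e' < e0 /\ e' < 1) by (unfold e'; pose proof (Rmin_l e0 1); pose proof (Rmin_r e0 1); assert (0 < Rmin e0 1) by (apply Rmin_pos; lra); lra).
      destruct (proj1 h3 _ (hKs (-1 + e') (1 - d') ltac:(simpl; lra) ltac:(simpl; lra)) 1) as [A hA].
      set (B := Rmax (Rmax A (2 * Rabs E / c0)) (Rabs E)).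
      assert (hB : A <= B /\ 2 * Rabs E / c0 <= B /\ Rabs E <= B).
      { unfold B. pose proof (Rmax_l (Rmax A (2 * Rabs E / c0)) (Rabs E)).
        pose proof (Rmax_r (Rmax A (2 * Rabs E / c0)) (Rabs E)).
        pose proof (Rmax_l A (2 * Rabs E / c0)). pose proof (Rmax_r A (2 * Rabs E / c0)). lra. }
      destruct (hPm B) as [d1 [hd1 hd1']].
      exists (Rmin d1 (T - t1)). split; [apply Rmin_pos; unfold t1; lra|].
      intros t ht ht'. pose proof (Rmin_l d1 (T - t1)). pose proof (Rmin_r d1 (T - t1)).
      pose proof (hd1' t ht ltac:(lra)) as hPt. simpl in hPt.
      pose proof (hE t ltac:(lra)) as hEt.
      pose proof (hKd t ht) as hk. simpl in hk.
      assert (hPpos : P t < 0) by (pose proof (Rabs_pos E); lra).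
      destruct (Rle_dec (1 - d') (X t)) as [hl|hl].
      * exfalso. pose proof (hconv (X t) (P t) hk). pose proof (hlow (X t) ltac:(lra)).
        assert (- (c0 / 2) * P t < Hp (X t) 0 * P t) by nra.
        assert (hq : 2 * Rabs E / c0 < - P t) by lra.
        assert (Rabs E < c0 / 2 * - P t).
        { apply Rmult_lt_compat_l with (r := c0 / 2) in hq; [|lra].
          replace (c0 / 2 * (2 * Rabs E / c0)) with (Rabs E) in hq by (field; lra). lra. }
        pose proof (Rle_abs E). lra.
      * destruct (Rle_dec (-1 + e') (X t)) as [hl2|hl2].
        -- exfalso. assert (hAP : A < Rabs (P t)) by (rewrite Rabs_left; lra).
           pose proof (div_gt _ _ (Rabs_pos_lt (P t) ltac:(lra)) (hA (P t) (X t) hAP ltac:(lra))) as hg.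
           rewrite Rabs_left in hg by lra. pose proof (Rle_abs E). lra.
        -- rewrite Rabs_right by lra. lra.
  - assert (hXbig : forall A, Ev T (fun t => A < Rabs (X t))).
    { intros A. set (A' := Rabs A).
      destruct (proj1 h3 _ (hKs (- A') A' I I) 1) as [B0 hB0].
      set (B := Rmax B0 (Rabs E)).
      assert (hB1 : B0 <= B) by apply Rmax_l. assert (hB2 : Rabs E <= B) by apply Rmax_r.
      destruct (hNR (- A') A' (- B) B I I) as [d [hd hd']].
      exists (Rmin d (T - t1)). split; [apply Rmin_pos; unfold t1; lra|].
      intros t ht ht'. pose proof (Rmin_l d (T - t1)). pose proof (Rmin_r d (T - t1)).
      specialize (hd' t ht ltac:(lra)).
      destruct (Rlt_dec A (Rabs (X t))) as [|hn]; auto. exfalso.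
      assert (hXin : - A' <= X t <= A').
      { unfold A'. pose proof (Rle_abs A). unfold Rabs in *. destruct Rcase_abs; destruct Rcase_abs in hn; lra. }
      assert (hPout : B < Rabs (P t)).
      { destruct (Rlt_dec B (Rabs (P t))) as [|hn2]; auto. exfalso. apply hd'. split; auto.
        unfold Rabs in hn2. destruct Rcase_abs in hn2; lra. }
      assert (hP0' : 0 < Rabs (P t)) by (pose proof (Rabs_pos E); lra).
      pose proof (div_gt _ _ hP0' (hB0 (P t) (X t) ltac:(lra) hXin)) as hg.
      pose proof (hE t ltac:(lra)). pose proof (Rle_abs E). lra. }
    destruct h5 as [[yp [qp (hyq1 & hyq2 & hyq3 & hyq4 & hyq5)]] [ym [qm (hym1 & hym2 & hym3 & hym4 & hym5)]]].
    destruct (sign_split X T hT hcX hXbig) as [hXp|hXm].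
    + right. split; [exact hXp|].
      apply (up_gen X P Hp (fun y q => - Hx y q) (fun y q => - Hxp y q) T yp qp hT).
      * intros s hs. exact (hder s hs).
      * intros y q. destruct (hC y q I) as (_&_&_&dxp&_).
        apply (deriv_ext _ (opp_fct (fun z => Hx y z))); [reflexivity|].
        apply derivable_pt_lim_opp. exact dxp.
      * intros y q. apply cont2_opp. destruct (hC y q I) as (_&_&_&_&_&_&_&_&_&_&cxp&_). exact cxp.
      * exact hyq3.
      * intros n y hy. apply hyq5; auto.
      * apply (far_right eps H Hx Hp Hxx Hxp Hpx Hpp); auto.
      * exact hXp.
    + left. split; [exact hXm|].
      apply (up_gen (fun t => - X t) (fun t => - P t) (fun y q => - Hp (- y) (- q)) (fun y q => Hx (- y) (- q))
        (fun y q => - Hxp (- y) (- q)) T (fun n => - ym n) (fun n => - qm n) hT).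
      * intros s hs. destruct (hder s hs) as [dX dP]. rewrite !Ropp_involutive. split.
        -- apply (deriv_ext _ (opp_fct X)); [reflexivity|]. apply derivable_pt_lim_opp. exact dX.
        -- replace (Hx (X s) (P s)) with (- - Hx (X s) (P s)) by ring.
           apply (deriv_ext _ (opp_fct P)); [reflexivity|]. apply derivable_pt_lim_opp. exact dP.
      * intros y q. destruct (hC (- y) (- q) I) as (_&_&_&dxp&_).
        replace (- Hxp (- y) (- q)) with (Hxp (- y) (- q) * (-1)) by ring.
        apply (deriv_ext _ (comp (fun z => Hx (- y) z) (fun z => - z))); [reflexivity|].
        apply derivable_pt_lim_comp; [|exact dxp].
        apply (deriv_ext _ (opp_fct id)); [reflexivity|].
        replace (-1) with (- 1) by ring. apply derivable_pt_lim_opp. apply derivable_pt_lim_id.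
      * intros y q. apply cont2_neg. destruct (hC (- y) (- q) I) as (_&_&_&_&_&_&_&_&_&_&cxp&_). exact cxp.
      * exact hym3.
      * intros n y hy. rewrite Ropp_involutive. pose proof (hym5 n (- y) I ltac:(lra)). lra.
      * intros M. destruct (far_left eps H Hx Hp Hxx Hxp Hpx Hpp hC hpp he h0 h3 h4 M) as [A0 hA0].
        exists (- A0). intros y q hy hq. pose proof (hA0 (- y) (- q) ltac:(lra) ltac:(lra)). lra.
      * exact hXm.
Qed.
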